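(* The compact wedges $\mathcal{S}_0$ and $\mathcal{S}_1$ are homotopy equivalent to the bouquets $\mathcal{WS}_0$ and $\mathcal{WS}_1$, respectively.
   Context: Let $n\ge1$, $\mathcal{S}=S^n$. $\mathcal{S}_0=\bigvee_{j\ge1}\mathcal{S}_0(j)$ is a compact (Hawaiian-earring type) wedge in $\mathbb{R}^{2n+2}$ of countably many copies $\mathcal{S}_0(j)$ of $S^n\times S^n$ at a common basepoint (the origin), factors meeting pairwise only at the basepoint, diameters tending to $0$. $\mathcal{S}_1=\bigvee_{j\ge1}\mathcal{S}_1(j)$ is the analogous compact wedge with $\mathcal{S}_1(1)$ a copy of $S^n$ and $\mathcal{S}_1(j)\cong S^n\times S^n$ for $j\ge2$. $\mathcal{WS}_0$ (resp. $\mathcal{WS}_1$) is the compact subspace of $\mathbb{R}^{2n+2}$ obtained as follows: take an arc $\bar A$ containing points $p_1,p_2,\dots$ in order, converging to an endpoint $p_\infty$ of $\bar A$, with $a_i$ the subarc from $p_i$ to $p_{i+1}$ and $\bar A=\bigcup_i a_i\cup\{p_\infty\}$; at each $p_j$ attach a copy of the factor $\mathcal{S}_0(j)$ (resp. $\mathcal{S}_1(j)$) meeting $\bar A$ only at $p_j$, the attached factors pairwise disjoint and with diameters tending to $0$. *)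

(* Defs.v *)
From Stdlib Require Import Reals Lra.
Open Scope R_scope.

(* Points of R^m are modelled as sequences nat -> R; a subset of R^m is a
   predicate whose members vanish at all coordinates >= m. *)
Definition pt := nat -> R.
Definition set := pt -> Prop.

Definition origin : pt := fun _ => 0.

Fixpoint sumsq (k m : nat) (x : pt) : R :=
  match m with
  | O => 0
  | S m' => sumsq k m' x + (x (k + m')%nat) ^ 2
  end.

Definition dist (m : nat) (x y : pt) : R := sqrt (sumsq 0 m (fun i => x i - y i)).

Definition inR (m : nat) (A : set) : Prop :=
  forall x, A x -> forall i, (m <= i)%nat -> x i = 0.

Definition maps_into (A B : set) (f : pt -> pt) : Prop := forall x, A x -> B (f x).

Definition cont_on (a b : nat) (A : set) (f : pt -> pt) : Prop :=
  forall x, A x -> forall eps, 0 < eps -> exists del, 0 < del /\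
    forall y, A y -> dist a x y < del -> dist b (f x) (f y) < eps.

Definition homeomorphic (a : nat) (A : set) (b : nat) (B : set) : Prop :=
  exists f g : pt -> pt,
    maps_into A B f /\ maps_into B A g /\ cont_on a b A f /\ cont_on b a B g /\
    (forall x, A x -> g (f x) = x) /\ (forall y, B y -> f (g y) = y).

Definition cont_homotopy (a b : nat) (A : set) (H : R -> pt -> pt) : Prop :=
  forall t x, 0 <= t <= 1 -> A x -> forall eps, 0 < eps -> exists del, 0 < del /\
    forall s y, 0 <= s <= 1 -> A y -> Rabs (t - s) < del -> dist a x y < del ->
      dist b (H t x) (H s y) < eps.

Definition homotopic_to_id (m : nat) (A : set) (h : pt -> pt) : Prop :=
  exists H : R -> pt -> pt,
    cont_homotopy m m A H /\
    (forall t x, 0 <= t <= 1 -> A x -> A (H t x)) /\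
    (forall x, A x -> H 0 x = h x) /\ (forall x, A x -> H 1 x = x).

Definition homotopy_equivalent (m : nat) (X Y : set) : Prop :=
  exists f g : pt -> pt,
    maps_into X Y f /\ maps_into Y X g /\ cont_on m m X f /\ cont_on m m Y g /\
    homotopic_to_id m X (fun x => g (f x)) /\ homotopic_to_id m Y (fun y => f (g y)).

Definition sphere (n : nat) : set :=
  fun x => (forall i, (n + 1 <= i)%nat -> x i = 0) /\ sumsq 0 (n + 1) x = 1.

Definition sphere_prod (n : nat) : set :=
  fun x => (forall i, (2 * n + 2 <= i)%nat -> x i = 0) /\
           sumsq 0 (n + 1) x = 1 /\ sumsq (n + 1) (n + 1) x = 1.

(* a factor model: ambient dimension and the model subspace *)
Definition factor := (nat * set)%type.

(* factors of S_0: all S^n x S^n (index j : nat stands for paper's j+1) *)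
Definition factors0 (n : nat) (j : nat) : factor := (2 * n + 2, sphere_prod n)%nat.

Definition factors1 (n : nat) (j : nat) : factor :=
  match j with
  | O => (n + 1, sphere n)%nat
  | S _ => (2 * n + 2, sphere_prod n)%nat
  end.

Definition diam_to_zero (m : nat) (P : nat -> set) : Prop :=
  forall eps, 0 < eps -> exists N, forall j, (N <= j)%nat ->
    forall x y, P j x -> P j y -> dist m x y < eps.

(* W is a compact (Hawaiian-earring type) wedge in R^(2n+2) of copies of the
   factors F j at the origin *)
Definition is_wedge (n : nat) (F : nat -> factor) (W : set) : Prop :=
  exists P : nat -> set,
    (forall j, inR (2 * n + 2) (P j)) /\
    (forall j, homeomorphic (2 * n + 2) (P j) (fst (F j)) (snd (F j))) /\
    (forall j, P j origin) /\
    (forall j k x, j <> k -> P j x -> P k x -> x = origin) /\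
    diam_to_zero (2 * n + 2) P /\
    (forall x, W x <-> exists j, P j x).

(* W is the bouquet WS: an arc gamma([0,1]) with points p_j = gamma (t j),
   t 0 = 0 < t 1 < ... -> 1, p_oo = gamma 1 the endpoint, and at each p_j a
   copy of the factor F j attached *)
Definition is_bouquet (n : nat) (F : nat -> factor) (W : set) : Prop :=
  exists (gamma : R -> pt) (t : nat -> R) (P : nat -> set),
    let m := (2 * n + 2)%nat in
    let Abar : set := fun x => exists s, 0 <= s <= 1 /\ x = gamma s in
    (forall s, 0 <= s <= 1 -> forall i, (m <= i)%nat -> gamma s i = 0) /\
    (forall s, 0 <= s <= 1 -> forall eps, 0 < eps -> exists del, 0 < del /\
       forall s', 0 <= s' <= 1 -> Rabs (s - s') < del -> dist m (gamma s) (gamma s') < eps) /\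
    (forall s s', 0 <= s <= 1 -> 0 <= s' <= 1 -> gamma s = gamma s' -> s = s') /\
    t 0%nat = 0 /\ (forall j, t j < t (S j)) /\ Un_cv t 1 /\
    (forall j, inR m (P j)) /\
    (forall j, homeomorphic m (P j) (fst (F j)) (snd (F j))) /\
    (forall j, P j (gamma (t j))) /\
    (forall j x, P j x -> Abar x -> x = gamma (t j)) /\
    (forall j k x, j <> k -> P j x -> P k x -> False) /\
    diam_to_zero m P /\
    (forall x, W x <-> Abar x \/ exists j, P j x).

(* Main.v *)
Require Import Defs.
From Stdlib Require Import Reals.
Open Scope R_scope.

From Stdlib Require Import Lra Lia FunctionalExtensionality ClassicalEpsilon Classical PropExtensionality.
Require Import Defs.
Open Scope R_scope.

Fixpoint ip (k m : nat) (x y : pt) : R :=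
  match m with O => 0 | S m' => ip k m' x y + x (k + m')%nat * y (k + m')%nat end.

Lemma sumsq_ip k m x : sumsq k m x = ip k m x x.
Proof. induction m; simpl; [reflexivity|rewrite IHm; ring]. Qed.

Lemma ip_sym k m x y : ip k m x y = ip k m y x.
Proof. induction m; simpl; [reflexivity|rewrite IHm; ring]. Qed.

Lemma ip_lin k m a b x y z :
  ip k m (fun i => a * x i + b * y i) z = a * ip k m x z + b * ip k m y z.
Proof. induction m; simpl; [ring|rewrite IHm; ring]. Qed.

Lemma ip_ext k m x x' y y' :
  (forall i, (k <= i < k + m)%nat -> x i = x' i /\ y i = y' i) ->
  ip k m x y = ip k m x' y'.
Proof.
  induction m; intro H; simpl; auto.
  rewrite IHm by (intros; apply H; lia).
  destruct (H (k+m)%nat) as [H1 H2]; [lia|]. rewrite H1, H2; ring.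
Qed.

Lemma sumsq_ext k m x x' :
  (forall i, (k <= i < k + m)%nat -> x i = x' i) -> sumsq k m x = sumsq k m x'.
Proof. intro H; rewrite !sumsq_ip; apply ip_ext; intros; split; apply H; auto. Qed.

Lemma sumsq_nonneg k m x : 0 <= sumsq k m x.
Proof. induction m; simpl; [lra|]. pose proof (pow2_ge_0 (x (k+m)%nat)); lra. Qed.

Lemma sumsq_split k a b x : sumsq k (a + b) x = sumsq k a x + sumsq (k + a) b x.
Proof.
  induction b; simpl. rewrite Nat.add_0_r; ring.
  rewrite Nat.add_succ_r; simpl. rewrite IHb. rewrite Nat.add_assoc. ring.
Qed.

Lemma sumsq_zero_coord k m x : sumsq k m x = 0 -> forall i, (k <= i < k + m)%nat -> x i = 0.
Proof.
  induction m; intros H i Hi; [lia|]. simpl in H.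
  pose proof (sumsq_nonneg k m x). pose proof (pow2_ge_0 (x (k+m)%nat)).
  destruct (Nat.eq_dec i (k+m)%nat) as [->|Hne].
  - simpl in *. nra.
  - apply IHm; [lra|lia].
Qed.

Lemma sumsq_coord_le k m x i : (k <= i < k + m)%nat -> x i ^ 2 <= sumsq k m x.
Proof.
  induction m; intro Hi; [lia|]. simpl.
  pose proof (sumsq_nonneg k m x). pose proof (pow2_ge_0 (x (k+m)%nat)).
  destruct (Nat.eq_dec i (k+m)%nat) as [->|Hne]. lra.
  pose proof (IHm ltac:(lia)); lra.
Qed.

Lemma ip_expand k m x y a b :
  ip k m (fun i => a * x i + b * y i) (fun i => a * x i + b * y i) =
  a*a * ip k m x x + 2*a*b * ip k m x y + b*b * ip k m y y.
Proof. induction m; simpl; [ring|rewrite IHm; ring]. Qed.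

Lemma cauchy_schwarz k m x y : (ip k m x y)^2 <= ip k m x x * ip k m y y.
Proof.
  set (A := ip k m x x); set (B := ip k m y y); set (C := ip k m x y).
  assert (HA : 0 <= A) by (unfold A; rewrite <- sumsq_ip; apply sumsq_nonneg).
  assert (HB : 0 <= B) by (unfold B; rewrite <- sumsq_ip; apply sumsq_nonneg).
  assert (Hq : forall l, 0 <= A - 2*l*C + l*l*B).
  { intro l. pose proof (ip_expand k m x y 1 (-l)).
    pose proof (sumsq_nonneg k m (fun i => 1 * x i + - l * y i)).
    rewrite sumsq_ip in H0. rewrite H in H0. fold A B C in H0. lra. }
  destruct (Req_dec B 0) as [HB0|HB0].
  - destruct (Req_dec C 0) as [HC0|HC0].
    + rewrite HC0, HB0. lra.
    + exfalso. specialize (Hq ((A+1)/(2*C))). rewrite HB0 in Hq.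
      replace (A - 2 * ((A + 1) / (2 * C)) * C + (A + 1) / (2 * C) * ((A + 1) / (2 * C)) * 0)
        with (-1) in Hq by (field; auto). lra.
  - specialize (Hq (C/B)).
    assert (0 <= (A*B - C*C)/B).
    { replace ((A*B - C*C)/B) with (A - 2 * (C / B) * C + C / B * (C / B) * B) by (field; auto). auto. }
    assert (0 <= A*B - C*C).
    { destruct (Rle_lt_dec 0 (A*B-C*C)); auto.
      exfalso. assert ((A*B-C*C)/B < 0). { unfold Rdiv. apply Rmult_neg_pos; [lra|]. apply Rinv_0_lt_compat; lra. } lra. }
    simpl. lra.
Qed.

Definition vsub (x y : pt) : pt := fun i => x i - y i.

Lemma dist_nonneg m x y : 0 <= dist m x y.
Proof. apply sqrt_pos. Qed.

Lemma dist_sym m x y : dist m x y = dist m y x.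
Proof. unfold dist. f_equal.
  assert (forall k, sumsq k m (fun i => x i - y i) = sumsq k m (fun i => y i - x i)); auto.
  intro k; induction m; simpl; auto. rewrite IHm. ring. Qed.

Lemma dist_refl m x : dist m x x = 0.
Proof. unfold dist. rewrite <- sqrt_0. f_equal.
  assert (forall k, sumsq k m (fun i => x i - x i) = 0); auto.
  intro k; induction m; simpl; auto. rewrite IHm. ring. Qed.

Lemma dist_coord m x y i : (i < m)%nat -> Rabs (x i - y i) <= dist m x y.
Proof.
  intro Hi. unfold dist. rewrite <- sqrt_Rsqr_abs. apply sqrt_le_1_alt.
  unfold Rsqr. pose proof (sumsq_coord_le 0 m (fun i => x i - y i) i ltac:(lia)). simpl in H. lra.
Qed.

Lemma sqrt_sumsq_le k m x y :
  ip k m x y <= sqrt (sumsq k m x) * sqrt (sumsq k m y).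
Proof.
  rewrite <- sqrt_mult by apply sumsq_nonneg. rewrite !sumsq_ip.
  destruct (Rle_lt_dec (ip k m x y) 0). { apply Rle_trans with 0; auto; apply sqrt_pos. }
  rewrite <- (sqrt_pow2 (ip k m x y)) by lra. apply sqrt_le_1_alt. apply cauchy_schwarz.
Qed.

Lemma dist_triangle m x y z : dist m x z <= dist m x y + dist m y z.
Proof.
  unfold dist.
  set (a := fun i => x i - y i). set (b := fun i => y i - z i).
  assert (E : sumsq 0 m (fun i => x i - z i) = sumsq 0 m (fun i => 1 * a i + 1 * b i)).
  { apply sumsq_ext. intros. unfold a, b. ring. }
  rewrite E. fold (sumsq 0 m a). 
  change (fun i : nat => y i - z i) with b. change (fun i : nat => x i - y i) with a.
  pose proof (sumsq_nonneg 0 m a). pose proof (sumsq_nonneg 0 m b).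
  pose proof (sqrt_sumsq_le 0 m a b).
  rewrite <- (sqrt_pow2 (sqrt (sumsq 0 m a) + sqrt (sumsq 0 m b))) by (pose proof (sqrt_pos (sumsq 0 m a)); pose proof (sqrt_pos (sumsq 0 m b)); lra).
  apply sqrt_le_1_alt. rewrite sumsq_ip, ip_expand. rewrite <- !sumsq_ip.
  replace ((sqrt (sumsq 0 m a) + sqrt (sumsq 0 m b)) ^ 2) with
    (Rsqr (sqrt (sumsq 0 m a)) + Rsqr (sqrt (sumsq 0 m b)) + 2 * (sqrt (sumsq 0 m a) * sqrt (sumsq 0 m b))) by (unfold Rsqr; ring).
  rewrite !Rsqr_sqrt by auto. lra.
Qed.

Lemma dist_coords_bound m x y e : 0 <= e ->
  (forall i, (i < m)%nat -> Rabs (x i - y i) <= e) -> dist m x y <= (INR m + 1) * e.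
Proof.
  intros He H. unfold dist.
  assert (Hs : sumsq 0 m (fun i => x i - y i) <= INR m * e^2).
  { clear -H He. induction m. simpl. lra.
    simpl sumsq. rewrite S_INR.
    assert (IH := IHm (fun i Hi => H i ltac:(lia))).
    assert (Rabs (x (0 + m)%nat - y (0+m)%nat) <= e) by (apply H; lia).
    assert ((x (0 + m)%nat - y (0 + m)%nat)^2 <= e^2).
    { rewrite <- (pow2_abs (x (0 + m)%nat - y (0 + m)%nat)). apply pow_incr. split; auto. apply Rabs_pos. }
    simpl in *. lra. }
  pose proof (pos_INR m).
  rewrite <- (sqrt_pow2 ((INR m + 1) * e)) by (apply Rmult_le_pos; lra).
  apply sqrt_le_1_alt. apply Rle_trans with (INR m * e^2); auto.
  pose proof (pow2_ge_0 e). simpl. nra.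
Qed.

Lemma dist_zero_eq m x y : dist m x y = 0 ->
  (forall i, (m <= i)%nat -> x i = 0) -> (forall i, (m <= i)%nat -> y i = 0) -> x = y.
Proof.
  intros H Hx Hy. apply functional_extensionality. intro i.
  destruct (Nat.lt_ge_cases i m).
  - pose proof (dist_coord m x y i H0). rewrite H in H1.
    pose proof (Rabs_pos (x i - y i)). assert (Rabs (x i - y i) = 0) by lra.
    destruct (Req_dec (x i - y i) 0); [lra|]. apply Rabs_no_R0 in H4; lra.
  - rewrite Hx, Hy; auto.
Qed.

Section Cont.
Context {X : Type} (d : X -> X -> R) (D : X -> Prop).

Definition cR (f : X -> R) (x : X) : Prop :=
  forall eps, 0 < eps -> exists del, 0 < del /\
    forall y, D y -> d x y < del -> Rabs (f x - f y) < eps.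

Definition cV (m : nat) (F : X -> pt) (x : X) : Prop :=
  forall eps, 0 < eps -> exists del, 0 < del /\
    forall y, D y -> d x y < del -> dist m (F x) (F y) < eps.

Lemma cR_const c x : cR (fun _ => c) x.
Proof. intros e He. exists 1. split; [lra|]. intros. rewrite Rminus_diag, Rabs_R0. auto. Qed.

Lemma cR_plus f g x : cR f x -> cR g x -> cR (fun y => f y + g y) x.
Proof.
  intros Hf Hg e He.
  destruct (Hf (e/2) ltac:(lra)) as [d1 [Hd1 H1]].
  destruct (Hg (e/2) ltac:(lra)) as [d2 [Hd2 H2]].
  exists (Rmin d1 d2). split. apply Rmin_pos; auto.
  intros y Dy Hy. pose proof (Rmin_l d1 d2). pose proof (Rmin_r d1 d2).
  specialize (H1 y Dy ltac:(lra)). specialize (H2 y Dy ltac:(lra)).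
  replace (f x + g x - (f y + g y)) with ((f x - f y) + (g x - g y)) by ring.
  eapply Rle_lt_trans. apply Rabs_triang. lra.
Qed.

Lemma cR_opp f x : cR f x -> cR (fun y => - f y) x.
Proof.
  intros Hf e He. destruct (Hf e He) as [d1 [Hd1 H1]]. exists d1. split; auto.
  intros y Dy Hy. replace (- f x - - f y) with (- (f x - f y)) by ring. rewrite Rabs_Ropp. auto.
Qed.

Lemma cR_minus f g x : cR f x -> cR g x -> cR (fun y => f y - g y) x.
Proof. intros. apply (cR_plus f (fun y => - g y)); auto. apply cR_opp; auto. Qed.

Lemma cR_mult f g x : cR f x -> cR g x -> cR (fun y => f y * g y) x.
Proof.
  intros Hf Hg e He.
  set (A := Rabs (f x) + 1). set (B := Rabs (g x) + 1).
  assert (HA : 0 < A) by (unfold A; pose proof (Rabs_pos (f x)); lra).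
  assert (HB : 0 < B) by (unfold B; pose proof (Rabs_pos (g x)); lra).
  destruct (Hf (e/(2*B)) ltac:(apply Rdiv_lt_0_compat; lra)) as [d1 [Hd1 H1]].
  destruct (Hg (Rmin 1 (e/(2*A))) ltac:(apply Rmin_pos; [lra|apply Rdiv_lt_0_compat; lra])) as [d2 [Hd2 H2]].
  exists (Rmin d1 d2). split. apply Rmin_pos; auto.
  intros y Dy Hy. pose proof (Rmin_l d1 d2). pose proof (Rmin_r d1 d2).
  specialize (H1 y Dy ltac:(lra)). specialize (H2 y Dy ltac:(lra)).
  pose proof (Rmin_l 1 (e/(2*A))). pose proof (Rmin_r 1 (e/(2*A))).
  replace (f x * g x - f y * g y) with (f x * (g x - g y) + g y * (f x - f y)) by ring.
  eapply Rle_lt_trans. apply Rabs_triang. rewrite !Rabs_mult.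
  assert (Hgy : Rabs (g y) <= B).
  { unfold B. replace (g y) with (g x - (g x - g y)) by ring.
    eapply Rle_trans. apply Rabs_triang. rewrite Rabs_Ropp. lra. }
  assert (E1 : Rabs (f x) * Rabs (g x - g y) <= Rabs (f x) * (e / (2*A))).
  { apply Rmult_le_compat_l. apply Rabs_pos. lra. }
  assert (E2 : Rabs (g y) * Rabs (f x - f y) <= B * (e / (2*B))).
  { apply Rmult_le_compat; try apply Rabs_pos; lra. }
  assert (E3 : Rabs (f x) * (e / (2*A)) < e/2).
  { unfold A. unfold A in HA. apply Rmult_lt_reg_r with (2 * (Rabs (f x) + 1)). lra.
    field_simplify; try lra. }
  assert (E4 : B * (e / (2*B)) = e/2) by (field; lra).
  lra.
Qed.

Lemma cR_inv f x : f x <> 0 -> cR f x -> cR (fun y => / f y) x.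
Proof.
  intros Hx Hf e He.
  set (c := Rabs (f x)). assert (Hc : 0 < c) by (apply Rabs_pos_lt; auto).
  assert (Hp : 0 < Rmin (c/2) (e*c*c/2)).
  { apply Rmin_pos; [lra|]. assert (0 < e*c) by (apply Rmult_lt_0_compat; lra).
    assert (0 < e*c*c) by (apply Rmult_lt_0_compat; lra). lra. }
  destruct (Hf _ Hp) as [d1 [Hd1 H1]].
  exists d1. split; auto. intros y Dy Hy. specialize (H1 y Dy Hy).
  pose proof (Rmin_l (c/2) (e*c*c/2)). pose proof (Rmin_r (c/2) (e*c*c/2)).
  assert (Hfy : c/2 <= Rabs (f y)).
  { unfold c in *. replace (f y) with (f x - (f x - f y)) by ring.
    pose proof (Rabs_triang_inv (f x) (f x - f y)). lra. }
  assert (Hfy0 : f y <> 0). { intro E. rewrite E, Rabs_R0 in Hfy. lra. }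
  replace (/ f x - / f y) with ((f y - f x) / (f x * f y)) by (field; auto).
  unfold Rdiv. rewrite Rabs_mult, Rabs_inv, Rabs_mult. fold c.
  replace (f y - f x) with (- (f x - f y)) by ring. rewrite Rabs_Ropp.
  apply Rmult_lt_reg_r with (c * Rabs (f y)). apply Rmult_lt_0_compat; lra.
  rewrite Rmult_assoc, Rinv_l by (apply Rgt_not_eq; apply Rmult_lt_0_compat; lra).
  assert (e * c * c / 2 <= e * (c * Rabs (f y))).
  { replace (e*c*c/2) with (e * (c * (c/2))) by field. apply Rmult_le_compat_l; [lra|].
    apply Rmult_le_compat_l; lra. }
  lra.
Qed.

Lemma cR_div f g x : g x <> 0 -> cR f x -> cR g x -> cR (fun y => f y / g y) x.
Proof. intros. unfold Rdiv. apply (cR_mult f (fun y => / g y)); auto. apply cR_inv; auto. Qed.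

Lemma Rabs_max_diff a b c e : Rabs (Rmax a b - Rmax c e) <= Rmax (Rabs (a - c)) (Rabs (b - e)).
Proof. unfold Rmax, Rabs. repeat (destruct Rle_dec); repeat (destruct Rcase_abs); lra. Qed.
Lemma Rabs_min_diff a b c e : Rabs (Rmin a b - Rmin c e) <= Rmax (Rabs (a - c)) (Rabs (b - e)).
Proof. unfold Rmin, Rmax, Rabs. repeat (destruct Rle_dec); repeat (destruct Rcase_abs); lra. Qed.

Lemma cR_max f g x : cR f x -> cR g x -> cR (fun y => Rmax (f y) (g y)) x.
Proof.
  intros Hf Hg e He.
  destruct (Hf e He) as [d1 [Hd1 H1]]. destruct (Hg e He) as [d2 [Hd2 H2]].
  exists (Rmin d1 d2). split. apply Rmin_pos; auto.
  intros y Dy Hy. pose proof (Rmin_l d1 d2). pose proof (Rmin_r d1 d2).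
  specialize (H1 y Dy ltac:(lra)). specialize (H2 y Dy ltac:(lra)).
  eapply Rle_lt_trans. apply Rabs_max_diff. unfold Rmax at 1. destruct Rle_dec; auto.
Qed.

Lemma cR_min f g x : cR f x -> cR g x -> cR (fun y => Rmin (f y) (g y)) x.
Proof.
  intros Hf Hg e He.
  destruct (Hf e He) as [d1 [Hd1 H1]]. destruct (Hg e He) as [d2 [Hd2 H2]].
  exists (Rmin d1 d2). split. apply Rmin_pos; auto.
  intros y Dy Hy. pose proof (Rmin_l d1 d2). pose proof (Rmin_r d1 d2).
  specialize (H1 y Dy ltac:(lra)). specialize (H2 y Dy ltac:(lra)).
  eapply Rle_lt_trans. apply Rabs_min_diff. unfold Rmax at 1. destruct Rle_dec; auto.
Qed.

Lemma cR_comp_pt (g : R -> R) f x : continuity_pt g (f x) -> cR f x -> cR (fun y => g (f y)) x.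
Proof.
  intros Hg Hf e He. destruct (Hg e He) as [a [Ha H]].
  destruct (Hf a Ha) as [d1 [Hd1 H1]]. exists d1. split; auto.
  intros y Dy Hy. specialize (H1 y Dy Hy).
  destruct (Req_dec (f y) (f x)) as [E|E]. rewrite E. rewrite Rminus_diag, Rabs_R0; auto.
  assert (Hc : D_x no_cond (f x) (f y) /\ R_dist (f y) (f x) < a).
  { split. split. exact I. auto. unfold R_dist. rewrite Rabs_minus_sym. auto. }
  assert (Hd := H (f y) Hc).
  unfold R_dist in Hd. simpl in Hd. rewrite Rabs_minus_sym. auto.
Qed.

Lemma cR_sqrt f x : 0 <= f x -> cR f x -> cR (fun y => sqrt (f y)) x.
Proof. intros. apply (cR_comp_pt sqrt f); auto. apply continuity_pt_sqrt; auto. Qed.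

Lemma cR_ext f g x : (forall y, D y -> f y = g y) -> D x -> cR g x -> cR f x.
Proof.
  intros E Dx H e He. destruct (H e He) as [d1 [Hd1 H1]]. exists d1; split; auto.
  intros. rewrite !E; auto.
Qed.

Lemma cV_ext m F G x : (forall y, D y -> F y = G y) -> D x -> cV m G x -> cV m F x.
Proof.
  intros E Dx H e He. destruct (H e He) as [d1 [Hd1 H1]]. exists d1; split; auto.
  intros. rewrite !E; auto.
Qed.

Lemma cV_coord m F x i : (i < m)%nat -> cV m F x -> cR (fun y => F y i) x.
Proof.
  intros Hi H e He. destruct (H e He) as [d1 [Hd1 H1]]. exists d1; split; auto.
  intros y Dy Hy. apply Rle_lt_trans with (dist m (F x) (F y)); [apply dist_coord; auto | apply H1; auto].
Qed.

Lemma min_list (N : nat) (P : nat -> R -> Prop) :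
  (forall k a b, 0 < a <= b -> P k b -> P k a) ->
  (forall k, (k < N)%nat -> exists del, 0 < del /\ P k del) ->
  exists del, 0 < del /\ forall k, (k < N)%nat -> P k del.
Proof.
  intros Hmono. induction N; intro H.
  - exists 1. split; [lra|]. intros; lia.
  - destruct IHN as [d1 [Hd1 H1]]. intros; apply H; lia.
    destruct (H N ltac:(lia)) as [d2 [Hd2 H2]].
    exists (Rmin d1 d2). split. apply Rmin_pos; auto.
    intros k Hk. pose proof (Rmin_l d1 d2). pose proof (Rmin_r d1 d2).
    pose proof (Rmin_pos d1 d2 Hd1 Hd2).
    destruct (Nat.eq_dec k N) as [->|Hne].
    + apply Hmono with d2; [lra|auto].
    + apply Hmono with d1; [lra|]. apply H1; lia.
Qed.

Lemma cV_of_coords m F x : (forall i, (i < m)%nat -> cR (fun y => F y i) x) -> cV m F x.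
Proof.
  intros H e He.
  set (e' := e / (2 * (INR m + 1))).
  assert (He' : 0 < e') by (unfold e'; apply Rdiv_lt_0_compat; [lra|]; pose proof (pos_INR m); lra).
  destruct (min_list m (fun i del => forall y, D y -> d x y < del -> Rabs (F x i - F y i) < e'))
    as [del [Hdel Hall]].
  { intros k a b Hab Hb y Dy Hy. apply Hb; auto; lra. }
  { intros k Hk. apply (H k Hk e' He'). }
  exists del. split; auto. intros y Dy Hy.
  eapply Rle_lt_trans. apply (dist_coords_bound m (F x) (F y) e'). lra.
  intros i Hi. left. apply Hall; auto.
  unfold e'. pose proof (pos_INR m). 
  replace ((INR m + 1) * (e / (2 * (INR m + 1)))) with (e/2) by (field; lra). lra.
Qed.

End Cont.

Lemma cR_sub {X} (d : X -> X -> R) (D D' : X -> Prop) f x :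
  (forall y, D' y -> D y) -> cR d D f x -> cR d D' f x.
Proof. intros S H e He. destruct (H e He) as [d1 [Hd1 H1]]. exists d1; split; auto. Qed.

Lemma cV_sub {X} (d : X -> X -> R) (D D' : X -> Prop) m F x :
  (forall y, D' y -> D y) -> cV d D m F x -> cV d D' m F x.
Proof. intros S H e He. destruct (H e He) as [d1 [Hd1 H1]]. exists d1; split; auto. Qed.

Lemma cV_comp {X Y} (d : X -> X -> R) (D : X -> Prop) (d' : Y -> Y -> R) (E : Y -> Prop)
  m (F : X -> Y) (G : Y -> pt) x :
  (forall e, 0 < e -> exists del, 0 < del /\ forall y, D y -> d x y < del -> d' (F x) (F y) < e) ->
  (forall y, D y -> E (F y)) -> cV d' E m G (F x) -> cV d D m (fun y => G (F y)) x.
Proof.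
  intros HF HE HG e He. destruct (HG e He) as [d1 [Hd1 H1]].
  destruct (HF d1 Hd1) as [d2 [Hd2 H2]]. exists d2; split; auto.
Qed.

Lemma cR_comp {X Y} (d : X -> X -> R) (D : X -> Prop) (d' : Y -> Y -> R) (E : Y -> Prop)
  (F : X -> Y) (G : Y -> R) x :
  (forall e, 0 < e -> exists del, 0 < del /\ forall y, D y -> d x y < del -> d' (F x) (F y) < e) ->
  (forall y, D y -> E (F y)) -> cR d' E G (F x) -> cR d D (fun y => G (F y)) x.
Proof.
  intros HF HE HG e He. destruct (HG e He) as [d1 [Hd1 H1]].
  destruct (HF d1 Hd1) as [d2 [Hd2 H2]]. exists d2; split; auto.
Qed.

Lemma cR_ip {X} (d : X -> X -> R) (D : X -> Prop) k m (F G : X -> pt) x :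
  (forall i, (k <= i < k + m)%nat -> cR d D (fun y => F y i) x /\ cR d D (fun y => G y i) x) ->
  cR d D (fun y => ip k m (F y) (G y)) x.
Proof.
  induction m; intro H; simpl.
  - apply cR_const.
  - apply (cR_plus d D (fun y => ip k m (F y) (G y))). apply IHm. intros; apply H; lia.
    destruct (H (k+m)%nat ltac:(lia)). apply (cR_mult d D (fun y => F y (k+m)%nat)); auto.
Qed.

Definition Rd (s t : R) : R := Rabs (s - t).
Definition d2 (m : nat) (p q : R * pt) : R := Rmax (Rabs (fst p - fst q)) (dist m (snd p) (snd q)).

Lemma d2_fst m p q : Rabs (fst p - fst q) <= d2 m p q.
Proof. apply Rmax_l. Qed.
Lemma d2_snd m p q : dist m (snd p) (snd q) <= d2 m p q.
Proof. apply Rmax_r. Qed.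

Lemma cR_fst m (D : R * pt -> Prop) x : cR (d2 m) D fst x.
Proof. intros e He. exists e; split; auto. intros y Dy Hy. apply Rle_lt_trans with (d2 m x y); auto. apply d2_fst. Qed.

Lemma cV_snd m (D : R * pt -> Prop) x : cV (d2 m) D m snd x.
Proof. intros e He. exists e; split; auto. intros y Dy Hy. apply Rle_lt_trans with (d2 m x y); auto. apply d2_snd. Qed.

Lemma cV_id m (D : pt -> Prop) x : cV (dist m) D m (fun y => y) x.
Proof. intros e He. exists e; split; auto. Qed.

Lemma choice_fun {A B : Type} (P : A -> B -> Prop) :
  (forall a, exists b, P a b) -> exists f : A -> B, forall a, P a (f a).
Proof.
  intro H. exists (fun a => proj1_sig (constructive_indefinite_description _ (H a))).
  intro a. exact (proj2_sig (constructive_indefinite_description _ (H a))).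
Qed.

Lemma inv_small e : 0 < e -> exists N, forall k, (N <= k)%nat -> / (INR k + 1) < e.
Proof.
  intro He. destruct (INR_archimed e 1 He) as [N HN]. exists N. intros k Hk.
  apply le_INR in Hk. pose proof (pos_INR N).
  apply Rmult_lt_reg_r with (INR k + 1). lra. rewrite Rinv_l by lra. nra.
Qed.

Lemma inv_pos k : 0 < / (INR k + 1).
Proof. apply Rinv_0_lt_compat. pose proof (pos_INR k); lra. Qed.

Definition subseq (phi : nat -> nat) := forall k, (phi k < phi (S k))%nat.

Lemma subseq_mono phi : subseq phi -> forall k k', (k <= k')%nat -> (phi k <= phi k')%nat.
Proof. intros H k k' Hk. induction Hk; auto. specialize (H m). lia. Qed.

Lemma subseq_ge phi : subseq phi -> forall k, (k <= phi k)%nat.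
Proof. intros H k. induction k; [lia|]. specialize (H k). lia. Qed.

Lemma subseq_comp phi psi : subseq phi -> subseq psi -> subseq (fun k => phi (psi k)).
Proof.
  intros Hp Hq k. specialize (Hq k).
  assert (H := subseq_mono phi Hp (S (psi k)) (psi (S k)) Hq). specialize (Hp (psi k)). lia.
Qed.

Lemma Un_cv_subseq u l psi : Un_cv u l -> subseq psi -> Un_cv (fun k => u (psi k)) l.
Proof.
  intros H Hp e He. destruct (H e He) as [N HN]. exists N. intros k Hk.
  apply HN. pose proof (subseq_ge psi Hp k). lia.
Qed.

Lemma extract1 (u : nat -> R) a b : (forall k, a <= u k <= b) ->
  exists phi l, subseq phi /\ a <= l <= b /\ Un_cv (fun k => u (phi k)) l.
Proof.
  intro Hu.
  destruct (Bolzano_Weierstrass u (fun c => a <= c <= b) (compact_P3 a b) Hu) as [l Hl].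
  assert (Hex : forall p : nat * nat, exists q, (fst p <= q)%nat /\ Rabs (u q - l) < / (INR (snd p) + 1)).
  { intros [N k]. simpl.
    destruct (Hl (disc l (mkposreal _ (inv_pos k))) N) as [q [Hq1 Hq2]].
    - exists (mkposreal _ (inv_pos k)). intros y Hy; auto.
    - exists q. split; auto. }
  destruct (choice_fun _ Hex) as [nx Hnx].
  set (phi := fix phi k := match k with O => nx (O, O) | S k' => nx (S (phi k'), S k') end).
  assert (Hphi : forall k, Rabs (u (phi k) - l) < / (INR k + 1)).
  { intros [|k]. exact (proj2 (Hnx (O, O))). exact (proj2 (Hnx (S (phi k), S k))). }
  assert (Hsub : subseq phi).
  { intro k. change (phi (S k)) with (nx (S (phi k), S k)). pose proof (proj1 (Hnx (S (phi k), S k))). simpl in H. lia. }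
  exists phi, l. split; auto. split.
  - split.
    + destruct (Rle_lt_dec a l) as [|Hlt]; auto. exfalso.
      destruct (inv_small (a - l) ltac:(lra)) as [N HN].
      specialize (Hphi N). specialize (HN N (le_n _)). specialize (Hu (phi N)).
      apply Rabs_def2 in Hphi. lra.
    + destruct (Rle_lt_dec l b) as [|Hlt]; auto. exfalso.
      destruct (inv_small (l - b) ltac:(lra)) as [N HN].
      specialize (Hphi N). specialize (HN N (le_n _)). specialize (Hu (phi N)).
      apply Rabs_def2 in Hphi. lra.
  - intros e He. destruct (inv_small e He) as [N HN]. exists N. intros k Hk.
    unfold R_dist. specialize (Hphi k). specialize (HN k Hk). lra.
Qed.

Definition vconv (m : nat) (z : nat -> pt) (L : pt) : Prop :=
  forall e, 0 < e -> exists N, forall k, (N <= k)%nat -> dist m (z k) L < e.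

Lemma max_list_nat (m : nat) (P : nat -> nat -> Prop) :
  (forall i N N', (N <= N')%nat -> P i N -> P i N') ->
  (forall i, (i < m)%nat -> exists N, P i N) -> exists N, forall i, (i < m)%nat -> P i N.
Proof.
  intros Hm. induction m; intro H.
  - exists O. intros; lia.
  - destruct IHm as [N1 H1]. intros; apply H; lia.
    destruct (H m ltac:(lia)) as [N2 H2].
    exists (Nat.max N1 N2). intros i Hi.
    destruct (Nat.eq_dec i m) as [->|Hne].
    + apply Hm with N2; auto; lia.
    + apply Hm with N1; [lia|]. apply H1; lia.
Qed.

Lemma vconv_of_coords m z L : (forall i, (i < m)%nat -> Un_cv (fun k => z k i) (L i)) -> vconv m z L.
Proof.
  intros H e He.
  set (e' := e / (2 * (INR m + 1))).
  assert (He' : 0 < e') by (unfold e'; apply Rdiv_lt_0_compat; [lra|]; pose proof (pos_INR m); lra).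
  destruct (max_list_nat m (fun i N => forall k, (N <= k)%nat -> Rabs (z k i - L i) < e')) as [N HN].
  { intros i N N' HNN' HP k Hk. apply HP. lia. }
  { intros i Hi. destruct (H i Hi e' He') as [N HN]. exists N. apply HN. }
  exists N. intros k Hk. eapply Rle_lt_trans. apply (dist_coords_bound m (z k) L e'). lra.
  intros i Hi. left. apply HN; auto.
  unfold e'. pose proof (pos_INR m).
  replace ((INR m + 1) * (e / (2 * (INR m + 1)))) with (e/2) by (field; lra). lra.
Qed.

Lemma vconv_subseq m z L psi : vconv m z L -> subseq psi -> vconv m (fun k => z (psi k)) L.
Proof.
  intros H Hp e He. destruct (H e He) as [N HN]. exists N. intros k Hk.
  apply HN. pose proof (subseq_ge psi Hp k). lia.
Qed.

Lemma vconv_unique m z L L' : vconv m z L -> vconv m z L' -> dist m L L' = 0.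
Proof.
  intros H1 H2. pose proof (dist_nonneg m L L').
  destruct (Req_dec (dist m L L') 0); auto. exfalso.
  set (r := dist m L L').
  destruct (H1 (r/2) ltac:(unfold r; lra)) as [N1 HN1].
  destruct (H2 (r/2) ltac:(unfold r; lra)) as [N2 HN2].
  specialize (HN1 (Nat.max N1 N2) ltac:(lia)). specialize (HN2 (Nat.max N1 N2) ltac:(lia)).
  pose proof (dist_triangle m L (z (Nat.max N1 N2)) L').
  rewrite (dist_sym m L (z _)) in H3. fold r in H3. lra.
Qed.

Lemma vconv_cont {X} (d : X -> X -> R) m (E : X -> Prop) (z : nat -> X) (L : X) (G : X -> pt) :
  (forall e, 0 < e -> exists N, forall k, (N <= k)%nat -> d L (z k) < e) ->
  (forall k, E (z k)) -> cV d E m G L -> vconv m (fun k => G (z k)) (G L).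
Proof.
  intros Hz HE HG e He. destruct (HG e He) as [del [Hdel H]].
  destruct (Hz del Hdel) as [N HN]. exists N. intros k Hk. rewrite dist_sym. apply H; auto.
Qed.

Definition vanish (m : nat) (x : pt) := forall i, (m <= i)%nat -> x i = 0.

Definition closedP (m : nat) (C : set) : Prop :=
  forall y x, (forall k, C (y k)) -> vconv m y x -> vanish m x -> C x.

Definition seqcompact (d : nat) (M : set) : Prop :=
  forall z, (forall k, M (z k)) -> exists phi L, subseq phi /\ M L /\ vconv d (fun k => z (phi k)) L.

Lemma extract_vec m (z : nat -> pt) : (forall k i, (i < m)%nat -> -1 <= z k i <= 1) ->
  exists phi L, subseq phi /\ (forall i, (i < m)%nat -> Un_cv (fun k => z (phi k) i) (L i)).
Proof.
  induction m; intro Hb.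
  - exists (fun k => k), (fun _ => 0). split. intro; lia. intros; lia.
  - destruct IHm as [phi [L [Hphi HL]]]. intros; apply Hb; lia.
    destruct (extract1 (fun k => z (phi k) m) (-1) 1) as [psi [l [Hpsi [_ Hl]]]].
    intro k; apply Hb; lia.
    exists (fun k => phi (psi k)), (fun i => if Nat.eq_dec i m then l else L i).
    split. apply subseq_comp; auto.
    intros i Hi. destruct (Nat.eq_dec i m) as [->|Hne]; auto.
    apply (Un_cv_subseq (fun k => z (phi k) i)); auto. apply HL; lia.
Qed.

Lemma seqcompact_crit d (M : set) :
  (forall x, M x -> vanish d x /\ forall i, (i < d)%nat -> -1 <= x i <= 1) ->
  (forall z L, (forall k, M (z k)) -> (forall i, (i < d)%nat -> Un_cv (fun k => z k i) (L i)) ->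
      vanish d L -> M L) ->
  seqcompact d M.
Proof.
  intros Hb Hc z Hz.
  destruct (extract_vec d z) as [phi [L [Hphi HL]]].
  { intros k i Hi. apply (proj2 (Hb _ (Hz k))); auto. }
  set (L' := fun i => if Compare_dec.lt_dec i d then L i else 0).
  exists phi, L'. split; auto.
  assert (HL' : forall i, (i < d)%nat -> Un_cv (fun k => z (phi k) i) (L' i)).
  { intros i Hi. unfold L'. destruct Compare_dec.lt_dec; [|lia]. auto. }
  split.
  - apply (Hc (fun k => z (phi k))); auto. intros i Hi. unfold L'. destruct Compare_dec.lt_dec; auto; lia.
  - apply vconv_of_coords; auto.
Qed.

Lemma Un_cv_ip k m (z w : nat -> pt) L W :
  (forall i, (k <= i < k + m)%nat -> Un_cv (fun j => z j i) (L i) /\ Un_cv (fun j => w j i) (W i)) ->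
  Un_cv (fun j => ip k m (z j) (w j)) (ip k m L W).
Proof.
  induction m; intro H; simpl.
  - intros e He. exists O. intros. unfold R_dist. rewrite Rminus_diag, Rabs_R0; auto.
  - apply CV_plus. apply IHm; intros; apply H; lia.
    destruct (H (k+m)%nat ltac:(lia)). apply CV_mult; auto.
Qed.

Lemma Un_cv_const c l : Un_cv (fun _ => c) l -> l = c.
Proof.
  intro H. apply UL_sequence with (fun _ : nat => c); auto.
  intros e He. exists O. intros. unfold R_dist. rewrite Rminus_diag, Rabs_R0; auto.
Qed.

Lemma homeo_closed m d (M Q : set) psi psinv :
  seqcompact d M -> maps_into Q M psi -> maps_into M Q psinv -> cont_on d m M psinv ->
  (forall y, Q y -> psinv (psi y) = y) -> inR m Q -> closedP m Q.
Proof.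
  intros Hc H1 H2 H3 H4 H5 y x Hy Hyx Hx.
  destruct (Hc (fun k => psi (y k))) as [phi [L [Hphi [HL HconvL]]]].
  { intro k; apply H1; auto. }
  assert (Hc1 : vconv m (fun k => psinv (psi (y (phi k)))) (psinv L)).
  { apply (vconv_cont (dist d) m M (fun k => psi (y (phi k))) L psinv).
    - intros e He. destruct (HconvL e He) as [N HN]. exists N. intros. rewrite dist_sym. auto.
    - intro k. apply H1; auto.
    - intros e He. apply (H3 L HL e He). }
  assert (Hc2 : vconv m (fun k => psinv (psi (y (phi k)))) x).
  { intros e He. destruct (Hyx e He) as [N HN]. exists N. intros k Hk.
    rewrite H4 by auto. apply HN. pose proof (subseq_ge phi Hphi k). lia. }
  pose proof (vconv_unique _ _ _ _ Hc2 Hc1).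
  assert (x = psinv L). { apply dist_zero_eq in H; auto. }
  subst x. apply H2; auto.
Qed.

Lemma sep_closed m (C : set) x : closedP m C -> ~ C x -> vanish m x ->
  exists del, 0 < del /\ forall y, C y -> del <= dist m x y.
Proof.
  intros Hc Hx Hv. apply NNPP. intro Hn.
  assert (Hall : forall k : nat, exists y, C y /\ dist m x y < / (INR k + 1)).
  { intro k. apply NNPP. intro Hk. apply Hn. exists (/ (INR k + 1)). split. apply inv_pos.
    intros y Cy. destruct (Rle_lt_dec (/ (INR k + 1)) (dist m x y)); auto. exfalso; apply Hk; eauto. }
  destruct (choice_fun _ Hall) as [y Hy]. apply Hx.
  apply (Hc y x); auto. intro k; apply Hy.
  intros e He. destruct (inv_small e He) as [N HN]. exists N. intros k Hk.
  rewrite dist_sym. specialize (HN k Hk). destruct (Hy k). lra.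
Qed.

Section Gamma.
Variable m : nat.
Variable gamma : R -> pt.
Hypothesis Hgv : forall s, 0 <= s <= 1 -> forall i, (m <= i)%nat -> gamma s i = 0.
Hypothesis Hgc : forall s, 0 <= s <= 1 -> forall eps, 0 < eps -> exists del, 0 < del /\
       forall s', 0 <= s' <= 1 -> Rabs (s - s') < del -> dist m (gamma s) (gamma s') < eps.
Hypothesis Hgi : forall s s', 0 <= s <= 1 -> 0 <= s' <= 1 -> gamma s = gamma s' -> s = s'.

Lemma gamma_seq (u : nat -> R) v : (forall k, 0 <= u k <= 1) -> 0 <= v <= 1 -> Un_cv u v ->
  vconv m (fun k => gamma (u k)) (gamma v).
Proof.
  intros Hu Hv Huv e He. destruct (Hgc v Hv e He) as [del [Hdel H]].
  destruct (Huv del Hdel) as [N HN]. exists N. intros k Hk. rewrite dist_sym.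
  apply H; auto. specialize (HN k Hk). unfold R_dist in HN. rewrite Rabs_minus_sym. auto.
Qed.

Lemma arc_closed : closedP m (fun x => exists s, 0 <= s <= 1 /\ x = gamma s).
Proof.
  intros y x Hy Hyx Hx.
  destruct (choice_fun _ Hy) as [u Hu].
  destruct (extract1 u 0 1) as [phi [v [Hphi [Hv Huv]]]]. intro k; apply Hu.
  exists v. split; auto.
  assert (H1 : vconv m (fun k => gamma (u (phi k))) (gamma v)).
  { apply gamma_seq; auto. intro; apply Hu. }
  assert (H2 : vconv m (fun k => gamma (u (phi k))) x).
  { intros e He. destruct (Hyx e He) as [N HN]. exists N. intros k Hk.
    rewrite <- (proj2 (Hu (phi k))). apply HN. pose proof (subseq_ge phi Hphi k). lia. }
  apply (dist_zero_eq m); auto. apply (vconv_unique _ _ _ _ H2 H1).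
Qed.

Lemma gamma_inv_cont u : 0 <= u <= 1 -> forall e, 0 < e -> exists del, 0 < del /\
  forall u', 0 <= u' <= 1 -> dist m (gamma u) (gamma u') < del -> Rabs (u - u') < e.
Proof.
  intros Hu e He. apply NNPP. intro Hn.
  assert (Hall : forall k : nat, exists u', (0 <= u' <= 1 /\ dist m (gamma u) (gamma u') < / (INR k + 1)) /\ e <= Rabs (u - u')).
  { intro k. apply NNPP. intro Hk. apply Hn. exists (/ (INR k + 1)). split. apply inv_pos.
    intros u' Hu' Hd. destruct (Rle_lt_dec e (Rabs (u - u'))); auto. exfalso; apply Hk; eauto. }
  destruct (choice_fun _ Hall) as [w Hw].
  destruct (extract1 w 0 1) as [phi [v [Hphi [Hv Hwv]]]]. intro k; apply Hw.
  assert (H1 : vconv m (fun k => gamma (w (phi k))) (gamma v)).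
  { apply gamma_seq; auto. intro; apply Hw. }
  assert (H2 : vconv m (fun k => gamma (w (phi k))) (gamma u)).
  { intros e' He'. destruct (inv_small e' He') as [N HN]. exists N. intros k Hk.
    rewrite dist_sym. destruct (Hw (phi k)) as [[_ Hd] _].
    pose proof (HN (phi k) ltac:(pose proof (subseq_ge phi Hphi k); lia)). lra. }
  assert (gamma u = gamma v).
  { apply (dist_zero_eq m); auto. apply (vconv_unique _ _ _ _ H2 H1). }
  apply Hgi in H; auto. subst v.
  destruct (Hwv e He) as [N HN]. specialize (HN N (le_n _)). unfold R_dist in HN.
  destruct (Hw (phi N)) as [_ Hge]. rewrite Rabs_minus_sym in Hge. lra.
Qed.

End Gamma.

Lemma ip_scal k m c x y : ip k m (fun i => c * x i) y = c * ip k m x y.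
Proof. induction m; simpl; [ring|rewrite IHm; ring]. Qed.

Lemma ip_scal2 k m c x : ip k m (fun i => c * x i) (fun i => c * x i) = c * c * ip k m x x.
Proof. induction m; simpl; [ring|rewrite IHm; ring]. Qed.

Lemma ip_sub_expand k m x y :
  ip k m (fun i => x i - y i) (fun i => x i - y i) = ip k m x x - 2 * ip k m x y + ip k m y y.
Proof. induction m; simpl; [ring|rewrite IHm; ring]. Qed.

Lemma ip_lin_l k m a b x y z :
  ip k m (fun i => a * x i + b * y i) z = a * ip k m x z + b * ip k m y z.
Proof. apply ip_lin. Qed.

Lemma ip_zero_r k m x y : (forall i, (k <= i < k + m)%nat -> y i = 0) -> ip k m x y = 0.
Proof. induction m; intro H; simpl; auto. rewrite IHm by (intros; apply H; lia). rewrite (H (k+m)%nat) by lia. ring. Qed.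

Lemma sumsq_block_le k b dd w : (k + b <= dd)%nat -> sumsq k b w <= sumsq 0 dd w.
Proof.
  intro H. replace dd with (k + (b + (dd - k - b)))%nat by lia.
  rewrite sumsq_split. rewrite sumsq_split. simpl.
  pose proof (sumsq_nonneg 0 k w). pose proof (sumsq_nonneg (k + b) (dd - k - b) w). lra.
Qed.

Lemma unit_coord_bound k b x i : ip k b x x = 1 -> (k <= i < k + b)%nat -> -1 <= x i <= 1.
Proof.
  intros H Hi. pose proof (sumsq_coord_le k b x i Hi). rewrite sumsq_ip, H in H0.
  simpl in H0. nra.
Qed.

Section Block.
Variables k b : nat.
Variable a : pt.
Hypothesis Ha : ip k b a a = 1.

Definition sb (z : pt) := ip k b z a.
Definition betaf (th s : R) := Rmax 0 (th - s) / Rmax (1 - th) (th - s).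
Definition Qf th z := sb z ^ 2 + betaf th (sb z) ^ 2 * (1 - sb z ^ 2).
Definition vb th z i := sb z * a i + betaf th (sb z) * (z i - sb z * a i).
Definition Sgb th z i := vb th z i / sqrt (Qf th z).

Lemma sb_bound z : ip k b z z = 1 -> -1 <= sb z <= 1.
Proof.
  intro Hz. pose proof (cauchy_schwarz k b z a). rewrite Hz, Ha in H. unfold sb. nra.
Qed.

Lemma sb_eq1 z : ip k b z z = 1 -> sb z = 1 -> forall i, (k <= i < k + b)%nat -> z i = a i.
Proof.
  intros Hz Hs i Hi. unfold sb in Hs.
  assert (sumsq k b (fun i => z i - a i) = 0).
  { rewrite sumsq_ip, ip_sub_expand, Hz, Ha, Hs. ring. }
  pose proof (sumsq_zero_coord _ _ _ H i Hi). lra.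
Qed.

Lemma betaf_range th s : 1/2 <= th <= 1 -> 0 <= betaf th s <= 1.
Proof.
  intro Hth. unfold betaf.
  assert (0 <= Rmax 0 (th - s)) by apply Rmax_l.
  assert (Rmax 0 (th - s) <= Rmax (1 - th) (th - s)).
  { unfold Rmax; repeat destruct Rle_dec; lra. }
  destruct (Req_dec (Rmax (1 - th) (th - s)) 0) as [E|E].
  - rewrite E in *. replace (Rmax 0 (th - s)) with 0 by lra. unfold Rdiv. rewrite Rmult_0_l. lra.
  - assert (0 < Rmax (1 - th) (th - s)) by lra. split.
    + unfold Rdiv. apply Rmult_le_pos; [lra|]. left; apply Rinv_0_lt_compat; lra.
    + apply Rmult_le_reg_r with (Rmax (1 - th) (th - s)); auto. unfold Rdiv.
      rewrite Rmult_assoc, Rinv_l by lra. lra.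
Qed.

Lemma betaf_zero th s : th <= s -> betaf th s = 0.
Proof. intro H. unfold betaf. rewrite Rmax_left by lra. unfold Rdiv. ring. Qed.

Lemma betaf_pos th s : 1/2 <= th <= 1 -> s < th -> 0 < betaf th s.
Proof.
  intros Hth H. unfold betaf. rewrite Rmax_right by lra.
  apply Rdiv_lt_0_compat; [lra|]. unfold Rmax; destruct Rle_dec; lra.
Qed.

Lemma betaf_one s : s < 1 -> betaf 1 s = 1.
Proof. intro H. unfold betaf. rewrite Rmax_right by lra. rewrite Rmax_right by lra. field. lra. Qed.

Lemma vb_ip th z : ip k b z z = 1 ->
  ip k b (vb th z) (vb th z) = Qf th z /\ ip k b (vb th z) a = sb z.
Proof.
  intro Hz. set (s := sb z). set (be := betaf th s).
  assert (E : forall i, vb th z i = (s - be * s) * a i + be * z i).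
  { intro i. unfold vb. fold s. fold be. ring. }
  assert (Eza : ip k b a z = s) by (unfold s, sb; apply ip_sym).
  split.
  - rewrite (ip_ext k b (vb th z) (fun i => (s - be * s) * a i + be * z i) (vb th z) (fun i => (s - be * s) * a i + be * z i))
      by (intros; rewrite !E; auto).
    rewrite ip_expand, Ha, Hz, Eza. unfold Qf. fold s be. ring.
  - rewrite (ip_ext k b (vb th z) (fun i => (s - be * s) * a i + be * z i) a a)
      by (intros; rewrite !E; auto).
    rewrite ip_lin, Ha. unfold s, sb. ring.
Qed.

Lemma Qf_pos th z : 1/2 <= th <= 1 -> ip k b z z = 1 -> 0 < Qf th z /\ Qf th z <= 1.
Proof.
  intros Hth Hz. unfold Qf. pose proof (sb_bound z Hz). set (s := sb z) in *.
  pose proof (betaf_range th s Hth). set (be := betaf th s) in *.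
  assert (0 <= 1 - s^2) by nra.
  assert (be^2 <= 1) by nra.
  split; [|nra].
  destruct (Rlt_dec s th) as [Hlt|Hge].
  - pose proof (betaf_pos th s Hth Hlt). fold be in H3.
    destruct (Req_dec s 0) as [->|Hs]. simpl. nra.
    assert (0 < s^2) by (simpl; nra). nra.
  - assert (0 < s^2) by (simpl; nra). nra.
Qed.

Lemma Sgb_unit th z : 1/2 <= th <= 1 -> ip k b z z = 1 -> ip k b (Sgb th z) (Sgb th z) = 1.
Proof.
  intros Hth Hz. destruct (Qf_pos th z Hth Hz) as [HQ _]. destruct (vb_ip th z Hz) as [E1 _].
  unfold Sgb. rewrite (ip_ext k b (fun i => vb th z i / sqrt (Qf th z)) (fun i => / sqrt (Qf th z) * vb th z i)
     (fun i => vb th z i / sqrt (Qf th z)) (fun i => / sqrt (Qf th z) * vb th z i)) by (intros; unfold Rdiv; split; ring).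
  rewrite ip_scal2, E1. pose proof (sqrt_lt_R0 _ HQ).
  rewrite <- Rinv_mult. rewrite sqrt_sqrt by lra. field. lra.
Qed.

Lemma Sgb_ip_a th z : 1/2 <= th <= 1 -> ip k b z z = 1 -> ip k b (Sgb th z) a = sb z / sqrt (Qf th z).
Proof.
  intros Hth Hz. destruct (vb_ip th z Hz) as [_ E2].
  unfold Sgb. rewrite (ip_ext k b (fun i => vb th z i / sqrt (Qf th z)) (fun i => / sqrt (Qf th z) * vb th z i) a a)
     by (intros; unfold Rdiv; split; ring).
  rewrite ip_scal, E2. unfold Rdiv. ring.
Qed.

Lemma Sgb_collapse th z : 1/2 <= th <= 1 -> ip k b z z = 1 -> th <= sb z ->
  forall i, Sgb th z i = a i.
Proof.
  intros Hth Hz Hs i. unfold Sgb, vb, Qf. rewrite betaf_zero by auto.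
  replace (sb z ^ 2 + 0 ^ 2 * (1 - sb z ^ 2)) with (sb z ^ 2) by ring.
  rewrite sqrt_pow2 by lra. field. lra.
Qed.

Lemma Sgb_one z : ip k b z z = 1 -> forall i, (k <= i < k + b)%nat -> Sgb 1 z i = z i.
Proof.
  intros Hz i Hi. pose proof (sb_bound z Hz).
  destruct (Req_dec (sb z) 1) as [E|E].
  - pose proof (sb_eq1 z Hz E i Hi). unfold Sgb, vb, Qf. rewrite E, H0.
    replace (1 ^ 2 + betaf 1 1 ^ 2 * (1 - 1 ^ 2)) with 1 by ring. rewrite sqrt_1. field.
  - unfold Sgb, vb, Qf. rewrite betaf_one by lra.
    replace (sb z ^ 2 + 1 ^ 2 * (1 - sb z ^ 2)) with 1 by ring. rewrite sqrt_1. field.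
Qed.

Lemma Sgb_near_a th z : 1/2 <= th <= 1 -> ip k b z z = 1 -> 0 <= sb z ->
  sumsq k b (fun i => Sgb th z i - a i) <= sumsq k b (fun i => z i - a i).
Proof.
  intros Hth Hz Hs. rewrite !sumsq_ip, !ip_sub_expand.
  rewrite Sgb_unit, Sgb_ip_a, Ha, Hz by auto. fold (sb z).
  destruct (Qf_pos th z Hth Hz) as [HQ HQ1].
  assert (sqrt (Qf th z) <= 1) by (rewrite <- sqrt_1; apply sqrt_le_1_alt; auto).
  pose proof (sqrt_lt_R0 _ HQ).
  assert (sb z <= sb z / sqrt (Qf th z)).
  { apply Rmult_le_reg_r with (sqrt (Qf th z)); auto. unfold Rdiv. rewrite Rmult_assoc, Rinv_l by lra. nra. }
  lra.
Qed.

Variable w : pt.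
Definition hc (x : pt) := 2 * ip k b x w / ip k b w w.
Definition hb (x : pt) (i : nat) := x i - hc x * w i.

Lemma ww_zero : ip k b w w = 0 -> forall i, (k <= i < k + b)%nat -> w i = 0.
Proof. intros H i Hi. apply (sumsq_zero_coord k b w); auto. rewrite sumsq_ip; auto. Qed.

Lemma xw_zero x : ip k b w w = 0 -> ip k b x w = 0.
Proof. intro H. apply ip_zero_r. apply ww_zero; auto. Qed.

Lemma hb_ip x : ip k b (hb x) w = - ip k b x w.
Proof.
  unfold hb. rewrite (ip_ext k b (fun i => x i - hc x * w i) (fun i => 1 * x i + (- hc x) * w i) w w) by (intros; split; ring).
  rewrite ip_lin. unfold hc.
  destruct (Req_dec (ip k b w w) 0) as [E|E].
  - rewrite E, (xw_zero x E). ring.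
  - field. auto.
Qed.

Lemma hb_invol x y : (forall i, (k <= i < k + b)%nat -> y i = hb x i) ->
  forall i, (k <= i < k + b)%nat -> hb y i = x i.
Proof.
  intros Hy i Hi. unfold hb at 1.
  assert (hc y = - hc x).
  { unfold hc. rewrite (ip_ext k b y (hb x) w w) by (intros; split; auto). rewrite hb_ip. unfold Rdiv. ring. }
  rewrite H, Hy by auto. unfold hb. ring.
Qed.

Lemma hb_unit x : ip k b (hb x) (hb x) = ip k b x x.
Proof.
  unfold hb. rewrite (ip_ext k b (fun i => x i - hc x * w i) (fun i => 1 * x i + (- hc x) * w i)
    (fun i => x i - hc x * w i) (fun i => 1 * x i + (- hc x) * w i)) by (intros; split; ring).
  rewrite ip_expand. unfold hc.
  destruct (Req_dec (ip k b w w) 0) as [E|E].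
  - rewrite E, (xw_zero x E). ring.
  - field. auto.
Qed.

End Block.

Lemma hb_swap k b p q : ip k b p p = 1 -> ip k b q q = 1 ->
  forall i, (k <= i < k + b)%nat -> hb k b (fun j => p j - q j) p i = q i.
Proof.
  intros Hp Hq i Hi. set (w := fun j => p j - q j).
  unfold hb, hc.
  destruct (Req_dec (ip k b w w) 0) as [E|E].
  - rewrite (ww_zero k b w E i Hi). unfold w in *. pose proof (ww_zero k b w E i Hi). unfold w in H. lra.
  - assert (ip k b w w = 2 * ip k b p w).
    { unfold w. rewrite ip_sub_expand.
      rewrite (ip_ext k b p p (fun j => p j - q j) (fun j => 1 * p j + (-1) * q j)) by (intros; split; ring).
      rewrite (ip_sym k b p (fun j => 1 * p j + -1 * q j)), ip_lin, Hp, Hq. rewrite (ip_sym k b q p). ring. }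
    replace (2 * ip k b p w / ip k b w w) with 1 by (rewrite H; field; lra).
    unfold w. ring.
Qed.

Lemma cR_pow2 {X} (d : X -> X -> R) D f x : cR d D f x -> cR d D (fun y => f y ^ 2) x.
Proof.
  intro H. assert (E : forall y, f y ^ 2 = f y * f y) by (intro; ring).
  intros e He. destruct (cR_mult d D f f x H H e He) as [del [Hdel Hd]].
  exists del; split; auto. intros y Dy Hy. rewrite !E. auto.
Qed.

Lemma block_coord_le k b x i : (k <= i < k + b)%nat -> Rabs (x i) <= sqrt (sumsq k b x).
Proof.
  intro Hi. rewrite <- sqrt_Rsqr_abs. apply sqrt_le_1_alt. unfold Rsqr.
  pose proof (sumsq_coord_le k b x i Hi). simpl in H. lra.
Qed.

Section BlockCont.
Variables k b dd : nat.
Hypothesis Hkb : (k + b <= dd)%nat.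
Variable a : pt.
Hypothesis Ha : ip k b a a = 1.

Definition Dom (q : R * pt) := 1/2 <= fst q <= 1 /\ ip k b (snd q) (snd q) = 1.

Lemma cR_coord p i : (i < dd)%nat -> cR (d2 dd) Dom (fun q => snd q i) p.
Proof. intro Hi. apply (cV_coord (d2 dd) Dom dd snd p i Hi). apply cV_snd. Qed.

Lemma cR_sb p : cR (d2 dd) Dom (fun q => sb k b a (snd q)) p.
Proof.
  unfold sb. apply (cR_ip (d2 dd) Dom k b (fun q => snd q) (fun _ => a)).
  intros i Hi. split. apply cR_coord; lia. apply cR_const.
Qed.

Lemma Sgb_cont p : Dom p -> forall i, (k <= i < k + b)%nat ->
  cR (d2 dd) Dom (fun q => Sgb k b a (fst q) (snd q) i) p.
Proof.
  intros [Hth Hz] i Hi. destruct p as [th z]. simpl in *.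
  pose proof (sb_bound k b a Ha z Hz) as Hsb.
  destruct (classic (th = 1 /\ sb k b a z = 1)) as [[E1 E2]|Hne].
  -
    subst th. intros e He.
    destruct (cR_sb (1, z) 1 ltac:(lra)) as [d1 [Hd1 H1]].
    exists (Rmin d1 e). split. apply Rmin_pos; auto.
    intros [th' z'] [Hth' Hz'] Hd. simpl in *.
    pose proof (Rmin_l d1 e). pose proof (Rmin_r d1 e).
    specialize (H1 (th', z') (conj Hth' Hz') ltac:(lra)). simpl in H1.
    assert (Hs' : 0 <= sb k b a z') by (rewrite E2 in H1; apply Rabs_def2 in H1; lra).
    rewrite (Sgb_one k b a Ha z Hz i Hi). rewrite (sb_eq1 k b a Ha z Hz E2 i Hi).
    rewrite Rabs_minus_sym.
    eapply Rle_lt_trans. apply (block_coord_le k b (fun j => Sgb k b a th' z' j - a j) i Hi).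
    eapply Rle_lt_trans. apply sqrt_le_1_alt. apply (Sgb_near_a k b a Ha th' z' Hth' Hz' Hs').
    rewrite (sumsq_ext k b (fun i0 => z' i0 - a i0) (fun i0 => z' i0 - z i0)).
    2:{ intros j Hj. rewrite (sb_eq1 k b a Ha z Hz E2 j Hj). auto. }
    eapply Rle_lt_trans. apply sqrt_le_1_alt. apply (sumsq_block_le k b dd); auto.
    fold (dist dd z' z). rewrite dist_sym.
    pose proof (d2_snd dd (1, z) (th', z')). simpl in H2. lra.
  -
    assert (Hden : 0 < Rmax (1 - th) (th - sb k b a z)).
    { destruct (Req_dec th 1). subst th. assert (sb k b a z < 1) by (destruct Hsb; destruct H0; auto; exfalso; auto).
      pose proof (Rmax_r (1 - 1) (1 - sb k b a z)); lra. pose proof (Rmax_l (1 - th) (th - sb k b a z)); lra. }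
    assert (Hbeta : cR (d2 dd) Dom (fun q => betaf (fst q) (sb k b a (snd q))) (th, z)).
    { unfold betaf. apply (cR_div (d2 dd) Dom (fun q => Rmax 0 (fst q - sb k b a (snd q)))
         (fun q => Rmax (1 - fst q) (fst q - sb k b a (snd q)))); simpl; try lra.
      - apply (cR_max (d2 dd) Dom (fun _ => 0)). apply cR_const.
        apply (cR_minus (d2 dd) Dom fst). apply cR_fst. apply cR_sb.
      - apply (cR_max (d2 dd) Dom (fun q => 1 - fst q)).
        apply (cR_minus (d2 dd) Dom (fun _ => 1)). apply cR_const. apply cR_fst.
        apply (cR_minus (d2 dd) Dom fst). apply cR_fst. apply cR_sb. }
    assert (HQ : cR (d2 dd) Dom (fun q => Qf k b a (fst q) (snd q)) (th, z)).
    { unfold Qf. apply (cR_plus (d2 dd) Dom (fun q => sb k b a (snd q) ^ 2)).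
      apply cR_pow2. apply cR_sb.
      apply (cR_mult (d2 dd) Dom (fun q => betaf (fst q) (sb k b a (snd q)) ^ 2)).
      apply cR_pow2. auto.
      apply (cR_minus (d2 dd) Dom (fun _ => 1)). apply cR_const. apply cR_pow2. apply cR_sb. }
    destruct (Qf_pos k b a Ha th z Hth Hz) as [HQp _].
    unfold Sgb. apply (cR_div (d2 dd) Dom (fun q => vb k b a (fst q) (snd q) i) (fun q => sqrt (Qf k b a (fst q) (snd q)))).
    + simpl. pose proof (sqrt_lt_R0 _ HQp). lra.
    + unfold vb. apply (cR_plus (d2 dd) Dom (fun q => sb k b a (snd q) * a i)).
      apply (cR_mult (d2 dd) Dom (fun q => sb k b a (snd q))). apply cR_sb. apply cR_const.
      apply (cR_mult (d2 dd) Dom (fun q => betaf (fst q) (sb k b a (snd q)))). auto.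
      apply (cR_minus (d2 dd) Dom (fun q => snd q i)). apply cR_coord; lia.
      apply (cR_mult (d2 dd) Dom (fun q => sb k b a (snd q))). apply cR_sb. apply cR_const.
    + apply (cR_sqrt (d2 dd) Dom (fun q => Qf k b a (fst q) (snd q))). simpl; lra. auto.
Qed.

End BlockCont.

Section HbCont.
Variables k b dd : nat.
Hypothesis Hkb : (k + b <= dd)%nat.
Variable w : pt.
Variable D : set.

Lemma hb_cont x i : (i < dd)%nat -> cR (dist dd) D (fun y => hb k b w y i) x.
Proof.
  intro Hi. unfold hb, hc.
  assert (Hc : forall j, (j < dd)%nat -> cR (dist dd) D (fun y => y j) x).
  { intros j Hj. apply (cV_coord (dist dd) D dd (fun y => y) x j Hj). apply cV_id. }
  apply (cR_minus (dist dd) D (fun y => y i)). apply Hc; auto.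
  apply (cR_mult (dist dd) D (fun y => 2 * ip k b y w / ip k b w w)); [|apply cR_const].
  unfold Rdiv. apply (cR_mult (dist dd) D (fun y => 2 * ip k b y w)); [|apply cR_const].
  apply (cR_mult (dist dd) D (fun _ => 2)). apply cR_const.
  apply (cR_ip (dist dd) D k b (fun y => y) (fun _ => w)). intros j Hj. split. apply Hc; lia. apply cR_const.
Qed.

Lemma coord_cont x i : (i < dd)%nat -> cR (dist dd) D (fun y => y i) x.
Proof. intro Hi. apply (cV_coord (dist dd) D dd (fun y => y) x i Hi). apply cV_id. Qed.

Lemma sb_cont a x : cR (dist dd) D (sb k b a) x.
Proof.
  unfold sb. apply (cR_ip (dist dd) D k b (fun y => y) (fun _ => a)).
  intros j Hj. split. apply coord_cont; lia. apply cR_const.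
Qed.

End HbCont.

Definition good (d : nat) (M : set) : Prop :=
  inR d M /\ seqcompact d M /\
  (forall p q, M p -> M q -> exists h, maps_into M M h /\ cont_on d d M h /\
      (forall x, M x -> h (h x) = x) /\ h p = q) /\
  (forall a, M a -> exists (s : pt -> R) (Sg : R -> pt -> pt),
     (forall z, M z -> s z <= 1) /\ s a = 1 /\ (forall z, M z -> s z = 1 -> z = a) /\
     (forall z, M z -> cR (dist d) M s z) /\
     (forall th z, 1/2 <= th <= 1 -> M z -> M (Sg th z)) /\
     (forall th z, 1/2 <= th <= 1 -> M z -> th <= s z -> Sg th z = a) /\
     (forall z, M z -> Sg 1 z = z) /\
     (forall p, 1/2 <= fst p <= 1 -> M (snd p) ->
        cV (d2 d) (fun q => 1/2 <= fst q <= 1 /\ M (snd q)) d (fun q => Sg (fst q) (snd q)) p)).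

Lemma cont_on_of_coords d M h : (forall x, M x -> forall i, (i < d)%nat -> cR (dist d) M (fun y => h y i) x) ->
  cont_on d d M h.
Proof. intros H x Mx. apply (cV_of_coords (dist d) M d h x). intros; apply H; auto. Qed.

Lemma good_sphere n : good (n + 1) (sphere n).
Proof.
  set (N := (n + 1)%nat).
  assert (Hunit : forall x, sphere n x -> ip 0 N x x = 1).
  { intros x [_ Hx]. rewrite <- sumsq_ip. auto. }
  assert (Hmk : forall x, vanish N x -> ip 0 N x x = 1 -> sphere n x).
  { intros x Hv Hx. split. auto. rewrite sumsq_ip; auto. }
  split; [|split; [|split]].
  - intros x [Hx _]. auto.
  - apply seqcompact_crit.
    + intros x Hx. split. intros i Hi; apply (proj1 Hx); auto. intros i Hi. apply (unit_coord_bound 0 N x i (Hunit x Hx)). lia.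
    + intros z L Hz HL Hv. apply Hmk; auto.
      assert (Hc := Un_cv_ip 0 N z z L L ltac:(intros; split; apply HL; lia)).
      apply Un_cv_const. eapply Un_cv_ext; [|exact Hc]. intro j. simpl. apply Hunit; auto.
  - intros p q Hp Hq.
    set (w := fun j => p j - q j).
    set (h := fun x i => if Compare_dec.lt_dec i N then hb 0 N w x i else x i).
    assert (Hblk : forall x i, (0 <= i < 0 + N)%nat -> h x i = hb 0 N w x i).
    { intros x i Hi. unfold h. destruct Compare_dec.lt_dec; auto; lia. }
    exists h. split; [|split; [|split]].
    + intros x Hx. apply Hmk.
      * intros i Hi. unfold h. destruct Compare_dec.lt_dec; [lia|]. apply (proj1 Hx); auto.
      * rewrite (ip_ext 0 N (h x) (hb 0 N w x) (h x) (hb 0 N w x)) by (intros; split; apply Hblk; auto).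
        rewrite hb_unit. apply Hunit; auto.
    + apply cont_on_of_coords. intros x Hx i Hi.
      apply (cR_ext (dist N) (sphere n) (fun y => h y i) (fun y => hb 0 N w y i)); auto.
      intros; apply Hblk; lia. apply hb_cont; auto.
    + intros x Hx. apply functional_extensionality. intro i.
      destruct (Compare_dec.lt_dec i N).
      * rewrite Hblk by lia. apply hb_invol; [intros j Hj; apply Hblk; auto | lia].
      * unfold h. destruct Compare_dec.lt_dec; [lia|]. auto.
    + apply functional_extensionality. intro i.
      destruct (Compare_dec.lt_dec i N).
      * rewrite Hblk by lia. apply hb_swap; auto. lia.
      * unfold h. destruct Compare_dec.lt_dec; [lia|]. rewrite (proj1 Hp), (proj1 Hq); auto; lia.
  - intros a Ha. pose proof (Hunit a Ha) as Ha1.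
    set (Sg := fun th z i => if Compare_dec.lt_dec i N then Sgb 0 N a th z i else 0).
    assert (Hblk : forall th z i, (0 <= i < 0 + N)%nat -> Sg th z i = Sgb 0 N a th z i).
    { intros th z i Hi. unfold Sg. destruct Compare_dec.lt_dec; auto; lia. }
    exists (sb 0 N a), Sg. split; [|split; [|split; [|split; [|split; [|split; [|split]]]]]].
    + intros z Hz. apply (sb_bound 0 N a Ha1 z (Hunit z Hz)).
    + unfold sb. auto.
    + intros z Hz Hs. apply functional_extensionality. intro i.
      destruct (Compare_dec.lt_dec i N).
      * apply (sb_eq1 0 N a Ha1 z (Hunit z Hz) Hs). lia.
      * rewrite (proj1 Hz), (proj1 Ha); auto; lia.
    + intros z Hz. apply sb_cont. lia.
    + intros th z Hth Hz. apply Hmk.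
      * intros i Hi. unfold Sg. destruct Compare_dec.lt_dec; auto; lia.
      * rewrite (ip_ext 0 N (Sg th z) (Sgb 0 N a th z) (Sg th z) (Sgb 0 N a th z)) by (intros; split; apply Hblk; auto).
        apply Sgb_unit; auto.
    + intros th z Hth Hz Hs. apply functional_extensionality. intro i. unfold Sg.
      destruct Compare_dec.lt_dec.
      * apply (Sgb_collapse 0 N a th z Hth (Hunit z Hz) Hs).
      * rewrite (proj1 Ha); auto; lia.
    + intros z Hz. apply functional_extensionality. intro i. unfold Sg.
      destruct Compare_dec.lt_dec.
      * apply (Sgb_one 0 N a Ha1 z (Hunit z Hz)). lia.
      * rewrite (proj1 Hz); auto; lia.
    + intros p Hth Hp. apply cV_of_coords. intros i Hi.
      apply (cR_ext (d2 N) _ (fun q => Sg (fst q) (snd q) i) (fun q => Sgb 0 N a (fst q) (snd q) i)).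
      intros; apply Hblk; lia. split; auto.
      apply (cR_sub (d2 N) (Dom 0 N) _). intros q [H1 H2]. split; auto.
      apply (Sgb_cont 0 N N ltac:(lia) a Ha1 p). split; auto. lia.
Qed.

Lemma good_sphere_prod n : good (2 * n + 2) (sphere_prod n).
Proof.
  set (N := (n + 1)%nat). set (dd := (2 * n + 2)%nat).
  assert (HNd : (N + N = dd)%nat) by (unfold N, dd; lia).
  assert (Hu1 : forall x, sphere_prod n x -> ip 0 N x x = 1).
  { intros x [_ [Hx _]]. rewrite <- sumsq_ip. auto. }
  assert (Hu2 : forall x, sphere_prod n x -> ip N N x x = 1).
  { intros x [_ [_ Hx]]. rewrite <- sumsq_ip. auto. }
  assert (Hmk : forall x, vanish dd x -> ip 0 N x x = 1 -> ip N N x x = 1 -> sphere_prod n x).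
  { intros x Hv H1 H2. split. auto. rewrite !sumsq_ip; auto. }
  assert (Hvan : forall x, sphere_prod n x -> vanish dd x) by (intros x Hx; exact (proj1 Hx)).
  split; [|split; [|split]].
  - intros x [Hx _]. auto.
  - apply seqcompact_crit.
    + intros x Hx. split. exact (Hvan x Hx). intros i Hi.
      destruct (Compare_dec.lt_dec i N).
      apply (unit_coord_bound 0 N x i (Hu1 x Hx)). lia.
      apply (unit_coord_bound N N x i (Hu2 x Hx)). lia.
    + intros z L Hz HL Hv. apply Hmk; auto.
      * assert (Hc := Un_cv_ip 0 N z z L L ltac:(intros; split; apply HL; lia)).
        apply Un_cv_const. eapply Un_cv_ext; [|exact Hc]. intro j. simpl. apply Hu1; auto.
      * assert (Hc := Un_cv_ip N N z z L L ltac:(intros; split; apply HL; lia)).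
        apply Un_cv_const. eapply Un_cv_ext; [|exact Hc]. intro j. simpl. apply Hu2; auto.
  - intros p q Hp Hq.
    set (w := fun j => p j - q j).
    set (h := fun x i => if Compare_dec.lt_dec i N then hb 0 N w x i else
                         if Compare_dec.lt_dec i dd then hb N N w x i else x i).
    assert (Hb1 : forall x i, (0 <= i < 0 + N)%nat -> h x i = hb 0 N w x i).
    { intros x i Hi. unfold h. destruct Compare_dec.lt_dec; auto; lia. }
    assert (Hb2 : forall x i, (N <= i < N + N)%nat -> h x i = hb N N w x i).
    { intros x i Hi. unfold h. destruct Compare_dec.lt_dec; [lia|]. destruct Compare_dec.lt_dec; auto; lia. }
    assert (Hb3 : forall x i, (dd <= i)%nat -> h x i = x i).
    { intros x i Hi. unfold h. destruct Compare_dec.lt_dec; [lia|]. destruct Compare_dec.lt_dec; auto; lia. }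
    exists h. split; [|split; [|split]].
    + intros x Hx. apply Hmk.
      * intros i Hi. rewrite Hb3 by auto. apply Hvan; auto.
      * rewrite (ip_ext 0 N (h x) (hb 0 N w x) (h x) (hb 0 N w x)) by (intros; split; apply Hb1; auto).
        rewrite hb_unit. apply Hu1; auto.
      * rewrite (ip_ext N N (h x) (hb N N w x) (h x) (hb N N w x)) by (intros; split; apply Hb2; auto).
        rewrite hb_unit. apply Hu2; auto.
    + apply cont_on_of_coords. intros x Hx i Hi.
      destruct (Compare_dec.lt_dec i N).
      * apply (cR_ext (dist dd) (sphere_prod n) (fun y => h y i) (fun y => hb 0 N w y i)); auto.
        intros; apply Hb1; lia. apply hb_cont; auto. lia.
      * apply (cR_ext (dist dd) (sphere_prod n) (fun y => h y i) (fun y => hb N N w y i)); auto.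
        intros; apply Hb2; lia. apply hb_cont; auto. lia.
    + intros x Hx. apply functional_extensionality. intro i.
      destruct (Compare_dec.lt_dec i N); [|destruct (Compare_dec.lt_dec i dd)].
      * rewrite Hb1 by lia. apply hb_invol; [intros j Hj; apply Hb1; auto | lia].
      * rewrite Hb2 by lia. apply hb_invol; [intros j Hj; apply Hb2; auto | lia].
      * rewrite !Hb3 by lia. auto.
    + apply functional_extensionality. intro i.
      destruct (Compare_dec.lt_dec i N); [|destruct (Compare_dec.lt_dec i dd)].
      * rewrite Hb1 by lia. apply hb_swap; auto. lia.
      * rewrite Hb2 by lia. apply hb_swap; auto. lia.
      * rewrite Hb3 by lia. rewrite (Hvan p), (Hvan q); auto; lia.
  - intros a Ha. pose proof (Hu1 a Ha) as Ha1. pose proof (Hu2 a Ha) as Ha2.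
    set (Sg := fun th z i => if Compare_dec.lt_dec i N then Sgb 0 N a th z i else
                             if Compare_dec.lt_dec i dd then Sgb N N a th z i else 0).
    assert (Hb1 : forall th z i, (0 <= i < 0 + N)%nat -> Sg th z i = Sgb 0 N a th z i).
    { intros th z i Hi. unfold Sg. destruct Compare_dec.lt_dec; auto; lia. }
    assert (Hb2 : forall th z i, (N <= i < N + N)%nat -> Sg th z i = Sgb N N a th z i).
    { intros th z i Hi. unfold Sg. destruct Compare_dec.lt_dec; [lia|]. destruct Compare_dec.lt_dec; auto; lia. }
    assert (Hb3 : forall th z i, (dd <= i)%nat -> Sg th z i = 0).
    { intros th z i Hi. unfold Sg. destruct Compare_dec.lt_dec; [lia|]. destruct Compare_dec.lt_dec; auto; lia. }
    exists (fun z => Rmin (sb 0 N a z) (sb N N a z)), Sg.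
    split; [|split; [|split; [|split; [|split; [|split; [|split]]]]]].
    + intros z Hz. pose proof (sb_bound 0 N a Ha1 z (Hu1 z Hz)). pose proof (Rmin_l (sb 0 N a z) (sb N N a z)). lra.
    + unfold sb. rewrite Ha1, Ha2. apply Rmin_left; lra.
    + intros z Hz Hs.
      pose proof (sb_bound 0 N a Ha1 z (Hu1 z Hz)). pose proof (sb_bound N N a Ha2 z (Hu2 z Hz)).
      pose proof (Rmin_l (sb 0 N a z) (sb N N a z)). pose proof (Rmin_r (sb 0 N a z) (sb N N a z)).
      apply functional_extensionality. intro i.
      destruct (Compare_dec.lt_dec i N); [|destruct (Compare_dec.lt_dec i dd)].
      * apply (sb_eq1 0 N a Ha1 z (Hu1 z Hz)). lra. lia.
      * apply (sb_eq1 N N a Ha2 z (Hu2 z Hz)). lra. lia.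
      * rewrite (Hvan z), (Hvan a); auto; lia.
    + intros z Hz. apply (cR_min (dist dd) (sphere_prod n) (sb 0 N a) (sb N N a)).
      apply sb_cont; lia. apply sb_cont; lia.
    + intros th z Hth Hz. apply Hmk.
      * intros i Hi. apply Hb3; auto.
      * rewrite (ip_ext 0 N (Sg th z) (Sgb 0 N a th z) (Sg th z) (Sgb 0 N a th z)) by (intros; split; apply Hb1; auto).
        apply Sgb_unit; auto.
      * rewrite (ip_ext N N (Sg th z) (Sgb N N a th z) (Sg th z) (Sgb N N a th z)) by (intros; split; apply Hb2; auto).
        apply Sgb_unit; auto.
    + intros th z Hth Hz Hs.
      pose proof (Rmin_l (sb 0 N a z) (sb N N a z)). pose proof (Rmin_r (sb 0 N a z) (sb N N a z)).
      apply functional_extensionality. intro i.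
      destruct (Compare_dec.lt_dec i N); [|destruct (Compare_dec.lt_dec i dd)].
      * rewrite Hb1 by lia. apply (Sgb_collapse 0 N a th z Hth (Hu1 z Hz)). lra.
      * rewrite Hb2 by lia. apply (Sgb_collapse N N a th z Hth (Hu2 z Hz)). lra.
      * rewrite Hb3 by lia. rewrite (Hvan a); auto; lia.
    + intros z Hz. apply functional_extensionality. intro i.
      destruct (Compare_dec.lt_dec i N); [|destruct (Compare_dec.lt_dec i dd)].
      * rewrite Hb1 by lia. apply (Sgb_one 0 N a Ha1 z (Hu1 z Hz)). lia.
      * rewrite Hb2 by lia. apply (Sgb_one N N a Ha2 z (Hu2 z Hz)). lia.
      * rewrite Hb3 by lia. rewrite (Hvan z); auto; lia.
    + intros p Hth Hp. apply cV_of_coords. intros i Hi.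
      destruct (Compare_dec.lt_dec i N).
      * apply (cR_ext (d2 dd) _ (fun q => Sg (fst q) (snd q) i) (fun q => Sgb 0 N a (fst q) (snd q) i)).
        intros; apply Hb1; lia. split; auto.
        apply (cR_sub (d2 dd) (Dom 0 N) _). intros q [H1 H2]. split; auto.
        apply (Sgb_cont 0 N dd ltac:(lia) a Ha1 p). split; auto. lia.
      * apply (cR_ext (d2 dd) _ (fun q => Sg (fst q) (snd q) i) (fun q => Sgb N N a (fst q) (snd q) i)).
        intros; apply Hb2; lia. split; auto.
        apply (cR_sub (d2 dd) (Dom N N) _). intros q [H1 H2]. split; auto.
        apply (Sgb_cont N N dd ltac:(lia) a Ha2 p). split; auto. lia.
Qed.

Lemma cV_loc {X} (d : X -> X -> R) (D C1 C2 : X -> Prop) m F x :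
  (exists del, 0 < del /\ forall y, D y -> d x y < del -> C1 y \/ C2 y) ->
  cV d (fun y => D y /\ C1 y) m F x -> cV d (fun y => D y /\ C2 y) m F x ->
  cV d D m F x.
Proof.
  intros [d0 [Hd0 H0]] H1 H2 e He.
  destruct (H1 e He) as [d1 [Hd1 K1]]. destruct (H2 e He) as [d2' [Hd2 K2]].
  exists (Rmin d0 (Rmin d1 d2')). split. repeat apply Rmin_pos; auto.
  intros y Dy Hy. pose proof (Rmin_l d0 (Rmin d1 d2')). pose proof (Rmin_r d0 (Rmin d1 d2')).
  pose proof (Rmin_l d1 d2'). pose proof (Rmin_r d1 d2').
  destruct (H0 y Dy ltac:(lra)); [apply K1|apply K2]; auto; lra.
Qed.

Lemma cV_if {X} (d : X -> X -> R) (D : X -> Prop) m (g : X -> R) (B1 B2 : X -> pt) x :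
  D x -> cR d D g x -> cV d D m B1 x -> cV d D m B2 x -> (g x = 0 -> B1 x = B2 x) ->
  cV d D m (fun y => if Rle_dec 0 (g y) then B1 y else B2 y) x.
Proof.
  intros Dx Hg H1 H2 Heq e He.
  destruct (H1 e He) as [d1 [Hd1 K1]]. destruct (H2 e He) as [d2' [Hd2 K2]].
  destruct (Rtotal_order (g x) 0) as [Hlt|[Heq0|Hgt]].
  - destruct (Hg (- g x) ltac:(lra)) as [d3 [Hd3 K3]].
    exists (Rmin d2' d3). split. apply Rmin_pos; auto.
    intros y Dy Hy. pose proof (Rmin_l d2' d3). pose proof (Rmin_r d2' d3).
    specialize (K3 y Dy ltac:(lra)). apply Rabs_def2 in K3.
    destruct Rle_dec; [lra|]. destruct Rle_dec; [lra|]. apply K2; auto; lra.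
  - specialize (Heq Heq0).
    exists (Rmin d1 d2'). split. apply Rmin_pos; auto.
    intros y Dy Hy. pose proof (Rmin_l d1 d2'). pose proof (Rmin_r d1 d2').
    destruct (Rle_dec 0 (g x)); [|lra].
    destruct Rle_dec. apply K1; auto; lra. rewrite Heq. apply K2; auto; lra.
  - destruct (Hg (g x) ltac:(lra)) as [d3 [Hd3 K3]].
    exists (Rmin d1 d3). split. apply Rmin_pos; auto.
    intros y Dy Hy. pose proof (Rmin_l d1 d3). pose proof (Rmin_r d1 d3).
    specialize (K3 y Dy ltac:(lra)). apply Rabs_def2 in K3.
    destruct Rle_dec; [|lra]. destruct Rle_dec; [|lra]. apply K1; auto; lra.
Qed.

Lemma sep_family m (C : nat -> set) (p : pt) (e : nat -> pt) x :
  (forall k, closedP m (C k)) -> (forall k, C k (e k)) -> vconv m e p ->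
  diam_to_zero m C -> vanish m x -> vanish m p -> x <> p ->
  exists del, 0 < del /\ forall k, ~ C k x -> forall y, C k y -> del <= dist m x y.
Proof.
  intros Hc He Hep Hdiam Hx Hp Hne.
  set (r := dist m x p).
  assert (Hr : 0 < r).
  { pose proof (dist_nonneg m x p). destruct (Req_dec r 0) as [E|E].
    - exfalso. apply Hne. apply dist_zero_eq with m; auto.
    - unfold r in *. destruct H as [H|H]; auto. exfalso; apply E; auto. }
  destruct (Hep (r/4) ltac:(lra)) as [N1 HN1].
  destruct (Hdiam (r/4) ltac:(lra)) as [N2 HN2].
  destruct (min_list (Nat.max N1 N2) (fun k del => ~ C k x -> forall y, C k y -> del <= dist m x y)) as [d0 [Hd0 H0]].
  { intros k a b Hab H Hn y Cy. specialize (H Hn y Cy). lra. }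
  { intros k Hk. destruct (classic (C k x)) as [Ck|Ck].
    - exists 1. split; [lra|]. intro; contradiction.
    - destruct (sep_closed m (C k) x (Hc k) Ck Hx) as [del [Hdel H]]. exists del. split; auto. }
  exists (Rmin d0 (r/2)). split. apply Rmin_pos; lra.
  intros k Hk y Cy. pose proof (Rmin_l d0 (r/2)). pose proof (Rmin_r d0 (r/2)).
  destruct (Compare_dec.lt_dec k (Nat.max N1 N2)) as [Hlt|Hge].
  - specialize (H0 k Hlt Hk y Cy). lra.
  - specialize (HN1 k ltac:(lia)). specialize (HN2 k ltac:(lia) y (e k) Cy (He k)).
    pose proof (dist_triangle m x y p). pose proof (dist_triangle m y (e k) p).
    unfold r in *. lra.
Qed.

Lemma cV_const_pt {X} (d : X -> X -> R) (D : X -> Prop) m (c : pt) x : cV d D m (fun _ => c) x.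
Proof. intros e He. exists 1. split; [lra|]. intros. rewrite dist_refl. auto. Qed.

Definition pick (C : nat -> set) (y : pt) : nat :=
  match excluded_middle_informative (exists j, C j y) with
  | left H => proj1_sig (constructive_indefinite_description _ H)
  | right _ => O end.

Lemma pick_spec C y : (exists j, C j y) -> C (pick C y) y.
Proof.
  intro H. unfold pick. destruct excluded_middle_informative as [H'|H'].
  exact (proj2_sig (constructive_indefinite_description _ H')). contradiction.
Qed.

Definition clamp (r : R) := Rmax 0 (Rmin 1 r).
Lemma clamp_range r : 0 <= clamp r <= 1.
Proof. unfold clamp, Rmax, Rmin; repeat destruct Rle_dec; lra. Qed.
Lemma clamp_id r : 0 <= r <= 1 -> clamp r = r.
Proof. intro H. unfold clamp, Rmax, Rmin; repeat destruct Rle_dec; lra. Qed.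

Definition th (t : R) := (1 + t) / 2.
Lemma th_range t : 0 <= t <= 1 -> 1/2 <= th t <= 1.
Proof. unfold th; lra. Qed.

Section Main.
Variable m : nat.
Variables (P Q : nat -> set) (gamma : R -> pt) (T : nat -> R) (dim : nat -> nat) (Mod : nat -> set).
Variables (phi phinv psi psinv : nat -> pt -> pt) (s : nat -> pt -> R) (Sg : nat -> R -> pt -> pt).

Definition Abar : set := fun x => exists u, 0 <= u <= 1 /\ x = gamma u.

Hypothesis HPin : forall j, inR m (P j).
Hypothesis HP0 : forall j, P j origin.
Hypothesis HPdisj : forall j k x, j <> k -> P j x -> P k x -> x = origin.
Hypothesis HPdiam : diam_to_zero m P.
Hypothesis Hgv : forall s, 0 <= s <= 1 -> forall i, (m <= i)%nat -> gamma s i = 0.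
Hypothesis Hgc : forall s, 0 <= s <= 1 -> forall eps, 0 < eps -> exists del, 0 < del /\
       forall s', 0 <= s' <= 1 -> Rabs (s - s') < del -> dist m (gamma s) (gamma s') < eps.
Hypothesis Hgi : forall s s', 0 <= s <= 1 -> 0 <= s' <= 1 -> gamma s = gamma s' -> s = s'.
Hypothesis HT0 : T 0%nat = 0.
Hypothesis HTinc : forall j, T j < T (S j).
Hypothesis HTcv : Un_cv T 1.
Hypothesis HQin : forall j, inR m (Q j).
Hypothesis HQg : forall j, Q j (gamma (T j)).
Hypothesis HQarc : forall j x, Q j x -> Abar x -> x = gamma (T j).
Hypothesis HQdisj : forall j k x, j <> k -> Q j x -> Q k x -> False.
Hypothesis HQdiam : diam_to_zero m Q.
Hypothesis HMc : forall j, seqcompact (dim j) (Mod j).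
Hypothesis Hphi1 : forall j, maps_into (P j) (Mod j) (phi j).
Hypothesis Hphi2 : forall j, maps_into (Mod j) (P j) (phinv j).
Hypothesis Hphi3 : forall j, cont_on m (dim j) (P j) (phi j).
Hypothesis Hphi4 : forall j, cont_on (dim j) m (Mod j) (phinv j).
Hypothesis Hphi5 : forall j x, P j x -> phinv j (phi j x) = x.
Hypothesis Hphi6 : forall j z, Mod j z -> phi j (phinv j z) = z.
Hypothesis Hpsi1 : forall j, maps_into (Q j) (Mod j) (psi j).
Hypothesis Hpsi2 : forall j, maps_into (Mod j) (Q j) (psinv j).
Hypothesis Hpsi3 : forall j, cont_on m (dim j) (Q j) (psi j).
Hypothesis Hpsi4 : forall j, cont_on (dim j) m (Mod j) (psinv j).
Hypothesis Hpsi5 : forall j x, Q j x -> psinv j (psi j x) = x.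
Hypothesis Hpsi6 : forall j z, Mod j z -> psi j (psinv j z) = z.
Hypothesis Hbase : forall j, psi j (gamma (T j)) = phi j origin.
Hypothesis Hs1 : forall j z, Mod j z -> s j z <= 1.
Hypothesis Hs2 : forall j, s j (phi j origin) = 1.
Hypothesis Hs3 : forall j z, Mod j z -> s j z = 1 -> z = phi j origin.
Hypothesis Hs4 : forall j z, Mod j z -> cR (dist (dim j)) (Mod j) (s j) z.
Hypothesis HSg1 : forall j t z, 1/2 <= t <= 1 -> Mod j z -> Mod j (Sg j t z).
Hypothesis HSg2 : forall j t z, 1/2 <= t <= 1 -> Mod j z -> t <= s j z -> Sg j t z = phi j origin.
Hypothesis HSg3 : forall j z, Mod j z -> Sg j 1 z = z.
Hypothesis HSg4 : forall j p, 1/2 <= fst p <= 1 -> Mod j (snd p) ->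
  cV (d2 (dim j)) (fun q => 1/2 <= fst q <= 1 /\ Mod j (snd q)) (dim j) (fun q => Sg j (fst q) (snd q)) p.

Lemma T_nonneg j : 0 <= T j.
Proof. induction j. lra. pose proof (HTinc j). lra. Qed.

Lemma T_incr j k : (j <= k)%nat -> T j <= T k.
Proof. intro H. induction H. lra. pose proof (HTinc m0). lra. Qed.

Lemma T_lt1 j : T j < 1.
Proof.
  apply Rlt_le_trans with (T (S j)). apply HTinc.
  destruct (Rle_lt_dec (T (S j)) 1) as [|Hlt]; auto. exfalso.
  destruct (HTcv (T (S j) - 1) ltac:(lra)) as [N HN].
  specialize (HN (Nat.max N (S j)) ltac:(lia)). unfold R_dist in HN.
  pose proof (T_incr (S j) (Nat.max N (S j)) ltac:(lia)). apply Rabs_def2 in HN. lra.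
Qed.

Lemma T_range j : 0 <= T j <= 1.
Proof. pose proof (T_nonneg j); pose proof (T_lt1 j); lra. Qed.

Definition ginv (y : pt) : R :=
  match excluded_middle_informative (Abar y) with
  | left H => proj1_sig (constructive_indefinite_description _ H)
  | right _ => 0 end.

Lemma ginv_spec y : Abar y -> 0 <= ginv y <= 1 /\ y = gamma (ginv y).
Proof.
  intro H. unfold ginv. destruct excluded_middle_informative as [H'|H']; [|contradiction].
  exact (proj2_sig (constructive_indefinite_description _ H')).
Qed.

Lemma ginv_gamma u : 0 <= u <= 1 -> ginv (gamma u) = u.
Proof.
  intro Hu. assert (Abar (gamma u)) by (exists u; auto).
  destruct (ginv_spec _ H) as [H1 H2]. apply Hgi; auto.
Qed.

Lemma gamma1_notQ j : ~ Q j (gamma 1).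
Proof.
  intro H. assert (Abar (gamma 1)) by (exists 1; split; [lra|auto]).
  pose proof (HQarc j _ H H0). apply Hgi in H1; [|lra|apply T_range]. pose proof (T_lt1 j). lra.
Qed.

Definition a (j : nat) := phi j origin.

Lemma a_mod j : Mod j (a j).
Proof. apply Hphi1. apply HP0. Qed.

Lemma psinv_a j : psinv j (a j) = gamma (T j).
Proof. unfold a. rewrite <- Hbase. apply Hpsi5. apply HQg. Qed.

Definition Wj (j : nat) (t : R) (z : pt) : pt :=
  if Rle_dec 0 (s j z - t) then gamma (T j + (1 - T j) * clamp (2 * (s j z - t)))
  else psinv j (Sg j t z).

Lemma param_range j c : 0 <= c <= 1 -> 0 <= T j + (1 - T j) * c <= 1.
Proof. intro Hc. pose proof (T_range j). split; nra. Qed.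

Lemma Wj_a j t : 1/2 <= t <= 1 -> Wj j t (a j) = gamma (T j + (1 - T j) * clamp (2 * (1 - t))).
Proof.
  intro Ht. unfold Wj. unfold a. rewrite (Hs2 j). destruct Rle_dec; [|lra]. auto.
Qed.

Lemma Wj_range j t z : 1/2 <= t <= 1 -> Mod j z ->
  Q j (Wj j t z) \/ exists u, T j <= u <= 1 /\ Wj j t z = gamma u.
Proof.
  intros Ht Hz. unfold Wj. destruct Rle_dec.
  - right. eexists. split; [|reflexivity]. pose proof (clamp_range (2 * (s j z - t))).
    pose proof (T_range j). split; nra.
  - left. apply Hpsi2. apply HSg1; auto.
Qed.

Definition Dj (j : nat) (q : R * pt) := 1/2 <= fst q <= 1 /\ Mod j (snd q).

Lemma snd_cont j (p : R * pt) : forall e, 0 < e -> exists del, 0 < del /\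
  forall y, Dj j y -> d2 (dim j) p y < del -> dist (dim j) (snd p) (snd y) < e.
Proof. intros e He. exists e. split; auto. intros. pose proof (d2_snd (dim j) p y). lra. Qed.

Lemma cR_s j p : Dj j p -> cR (d2 (dim j)) (Dj j) (fun q => s j (snd q)) p.
Proof.
  intro Hp. apply (cR_comp (d2 (dim j)) (Dj j) (dist (dim j)) (Mod j) snd (s j)).
  apply snd_cont. intros y [_ Hy]; auto. apply Hs4. apply Hp.
Qed.

Lemma cR_clamp {X} (d : X -> X -> R) D f x : cR d D f x -> cR d D (fun y => clamp (f y)) x.
Proof.
  intro H. unfold clamp. apply (cR_max d D (fun _ => 0)). apply cR_const.
  apply (cR_min d D (fun _ => 1)). apply cR_const. auto.
Qed.

Lemma W_cont j p : Dj j p -> cV (d2 (dim j)) (Dj j) m (fun q => Wj j (fst q) (snd q)) p.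
Proof.
  intro Hp. unfold Wj.
  assert (Hg : cR (d2 (dim j)) (Dj j) (fun q => s j (snd q) - fst q) p).
  { apply (cR_minus (d2 (dim j)) (Dj j) (fun q => s j (snd q))). apply cR_s; auto. apply cR_fst. }
  apply (cV_if (d2 (dim j)) (Dj j) m (fun q => s j (snd q) - fst q)
     (fun q => gamma (T j + (1 - T j) * clamp (2 * (s j (snd q) - fst q))))
     (fun q => psinv j (Sg j (fst q) (snd q)))); auto.
  - apply (cV_comp (d2 (dim j)) (Dj j) Rd (fun u => 0 <= u <= 1) m
      (fun q => T j + (1 - T j) * clamp (2 * (s j (snd q) - fst q))) gamma).
    + intros e He.
      assert (Hc : cR (d2 (dim j)) (Dj j) (fun q => T j + (1 - T j) * clamp (2 * (s j (snd q) - fst q))) p).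
      { apply (cR_plus (d2 (dim j)) (Dj j) (fun _ => T j)). apply cR_const.
        apply (cR_mult (d2 (dim j)) (Dj j) (fun _ => 1 - T j)). apply cR_const.
        apply cR_clamp. apply (cR_mult (d2 (dim j)) (Dj j) (fun _ => 2)). apply cR_const. auto. }
      apply Hc; auto.
    + intros y _. apply param_range. apply clamp_range.
    + intros e He. apply Hgc; auto. apply param_range. apply clamp_range.
  - apply (cV_comp (d2 (dim j)) (Dj j) (dist (dim j)) (Mod j) m (fun q => Sg j (fst q) (snd q)) (psinv j)).
    + intros e He. destruct Hp as [Hp1 Hp2]. apply (HSg4 j p Hp1 Hp2 e He).
    + intros y [Hy1 Hy2]. apply HSg1; auto.
    + destruct Hp as [Hp1 Hp2]. intros e He. apply (Hpsi4 j); auto.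
  - intro H0. destruct Hp as [Hp1 Hp2].
    replace (2 * (s j (snd p) - fst p)) with 0 by lra.
    rewrite HSg2 by (auto; lra). fold (a j). rewrite psinv_a.
    f_equal. rewrite clamp_id by lra. ring.
Qed.


Definition Sx : set := fun x => exists j, P j x.
Definition Wx : set := fun y => Abar y \/ exists j, Q j y.

Definition fw (x : pt) : pt :=
  if excluded_middle_informative (x = origin) then gamma 1
  else Wj (pick P x) (1/2) (phi (pick P x) x).
Definition gc (y : pt) : pt :=
  if excluded_middle_informative (Abar y) then origin
  else phinv (pick Q y) (psi (pick Q y) y).
Definition HS (t : R) (x : pt) : pt :=
  if excluded_middle_informative (x = origin) then origin
  else phinv (pick P x) (Sg (pick P x) (th t) (phi (pick P x) x)).
Definition HW (t : R) (y : pt) : pt :=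
  if excluded_middle_informative (Abar y) then gamma (1 - t * (1 - ginv y))
  else Wj (pick Q y) (th t) (psi (pick Q y) y).

Lemma pickP_eq j x : P j x -> x <> origin -> pick P x = j.
Proof.
  intros H Hx. assert (H' := pick_spec P x (ex_intro _ j H)).
  destruct (Nat.eq_dec (pick P x) j) as [|Hne]; auto. exfalso. apply Hx. apply (HPdisj _ _ _ Hne H' H).
Qed.

Lemma pickQ_eq j y : Q j y -> pick Q y = j.
Proof.
  intros H. assert (H' := pick_spec Q y (ex_intro _ j H)).
  destruct (Nat.eq_dec (pick Q y) j) as [|Hne]; auto. exfalso. apply (HQdisj _ _ _ Hne H' H).
Qed.

Lemma Abar_gT j : Abar (gamma (T j)).
Proof. exists (T j). split; auto. apply T_range. Qed.

Lemma E_fw j x : P j x -> fw x = Wj j (1/2) (phi j x).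
Proof.
  intro H. unfold fw. destruct excluded_middle_informative as [E|E].
  - subst x. fold (a j). rewrite Wj_a by lra. f_equal. rewrite clamp_id by lra. field.
  - rewrite (pickP_eq j x H E). auto.
Qed.

Lemma E_gc j y : Q j y -> gc y = phinv j (psi j y).
Proof.
  intro H. unfold gc. destruct excluded_middle_informative as [E|E].
  - rewrite (HQarc j y H E). rewrite Hbase. rewrite Hphi5; auto.
  - rewrite (pickQ_eq j y H). auto.
Qed.

Lemma E_gc_A y : Abar y -> gc y = origin.
Proof. intro H. unfold gc. destruct excluded_middle_informative; [auto|contradiction]. Qed.

Lemma E_HS j t x : P j x -> 0 <= t <= 1 -> HS t x = phinv j (Sg j (th t) (phi j x)).
Proof.
  intros H Ht. pose proof (th_range t Ht). unfold HS. destruct excluded_middle_informative as [E|E].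
  - subst x. rewrite HSg2; auto. rewrite Hphi5; auto. apply a_mod.
    rewrite Hs2. lra.
  - rewrite (pickP_eq j x H E). auto.
Qed.

Lemma E_HW_A t y : Abar y -> HW t y = gamma (1 - t * (1 - ginv y)).
Proof. intro H. unfold HW. destruct excluded_middle_informative; [auto|contradiction]. Qed.

Lemma E_HW j t y : Q j y -> 0 <= t <= 1 -> HW t y = Wj j (th t) (psi j y).
Proof.
  intros H Ht. pose proof (th_range t Ht). unfold HW. destruct excluded_middle_informative as [E|E].
  - rewrite (HQarc j y H E). rewrite Hbase. fold (a j). rewrite Wj_a by auto.
    rewrite ginv_gamma by apply T_range. f_equal.
    unfold th. rewrite clamp_id by lra. field.
  - rewrite (pickQ_eq j y H). auto.
Qed.

Lemma Wj_in_W j t z : 1/2 <= t <= 1 -> Mod j z -> Wx (Wj j t z).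
Proof.
  intros Ht Hz. destruct (Wj_range j t z Ht Hz) as [H|[u [Hu E]]].
  right; eauto. left. exists u. split; auto. pose proof (T_range j); lra.
Qed.

Lemma near_tail : forall e, 0 < e -> exists N, forall k, (N <= k)%nat -> forall y,
  (Q k y \/ exists u, T k <= u <= 1 /\ y = gamma u) -> dist m y (gamma 1) < e.
Proof.
  intros e He.
  destruct (Hgc 1 ltac:(lra) (e/2) ltac:(lra)) as [d1 [Hd1 H1]].
  destruct (HTcv d1 Hd1) as [N1 HN1].
  destruct (HQdiam (e/2) ltac:(lra)) as [N2 HN2].
  exists (Nat.max N1 N2). intros k Hk y Hy.
  assert (HTk : Rabs (1 - T k) < d1).
  { specialize (HN1 k ltac:(lia)). unfold R_dist in HN1. rewrite Rabs_minus_sym. auto. }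
  pose proof (T_range k).
  destruct Hy as [Hy|[u [Hu E]]].
  - specialize (HN2 k ltac:(lia) y (gamma (T k)) Hy (HQg k)).
    specialize (H1 (T k) H HTk). rewrite dist_sym in H1.
    pose proof (dist_triangle m y (gamma (T k)) (gamma 1)). lra.
  - subst y. rewrite dist_sym. apply Rlt_trans with (e/2); [|lra]. apply H1. lra.
    rewrite Rabs_right in HTk by lra. rewrite Rabs_right by lra. lra.
Qed.

Lemma P_closed j : closedP m (P j).
Proof. apply (homeo_closed m (dim j) (Mod j) (P j) (phi j) (phinv j)); auto. Qed.
Lemma Q_closed j : closedP m (Q j).
Proof. apply (homeo_closed m (dim j) (Mod j) (Q j) (psi j) (psinv j)); auto. Qed.
Lemma A_closed : closedP m Abar.
Proof. apply (arc_closed m gamma Hgv Hgc). Qed.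

Lemma vanish_origin : vanish m origin.
Proof. intros i _. reflexivity. Qed.

Section Glue.
Context {X : Type} (d : X -> X -> R) (D : X -> Prop) (pi : X -> pt) (F : X -> pt) (e : pt).
Hypothesis Hpi : forall x y, dist m (pi x) (pi y) <= d x y.

Lemma wedge_glue :
  (forall x, D x -> Sx (pi x)) ->
  (forall j x, D x -> P j (pi x) -> cV d (fun y => D y /\ P j (pi y)) m F x) ->
  (forall x, D x -> pi x = origin -> F x = e) ->
  (forall eps, 0 < eps -> exists N, forall k, (N <= k)%nat -> forall y, D y -> P k (pi y) -> dist m (F y) e < eps) ->
  forall x, D x -> cV d D m F x.
Proof.
  intros HD HP He Hinf x Dx.
  destruct (classic (pi x = origin)) as [E|E].
  - intros eps Heps. destruct (Hinf eps Heps) as [N HN].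
    destruct (min_list N (fun k del => forall y, D y /\ P k (pi y) -> d x y < del -> dist m (F x) (F y) < eps)) as [del [Hdel Hall]].
    { intros k a0 b0 Hab Hb y Hy Hd. apply Hb; auto; lra. }
    { intros k Hk. apply (HP k x Dx ltac:(rewrite E; apply HP0) eps Heps). }
    exists del. split; auto. intros y Dy Hy.
    destruct (HD y Dy) as [k Hk].
    destruct (Compare_dec.lt_dec k N).
    + apply (Hall k); auto.
    + rewrite (He x Dx E), dist_sym. apply (HN k); auto. lia.
  - destruct (HD x Dx) as [j Hj].
    destruct (sep_family m P origin (fun _ => origin) (pi x) P_closed HP0) as [d0 [Hd0 H0]].
    { intros eps Heps. exists O. intros. rewrite dist_refl. auto. }
    { auto. } { intros i Hi. apply (HPin j); auto. } { apply vanish_origin. } { auto. }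
    apply (cV_loc d D (fun y => P j (pi y)) (fun y => P j (pi y))); try apply HP; auto.
    exists d0. split; auto. intros y Dy Hy. left.
    destruct (HD y Dy) as [k Hk].
    destruct (classic (P k (pi x))) as [Hk'|Hk'].
    + destruct (Nat.eq_dec k j) as [->|Hne]; auto. exfalso. apply E. apply (HPdisj k j); auto.
    + specialize (H0 k Hk' (pi y) Hk). specialize (Hpi x y). lra.
Qed.

Lemma bouquet_glue :
  (forall x, D x -> Wx (pi x)) ->
  (forall x, D x -> Abar (pi x) -> cV d (fun y => D y /\ Abar (pi y)) m F x) ->
  (forall j x, D x -> Q j (pi x) -> cV d (fun y => D y /\ Q j (pi y)) m F x) ->
  (forall x, D x -> pi x = gamma 1 -> F x = e) ->
  (forall eps, 0 < eps -> exists N, forall k, (N <= k)%nat -> forall y, D y -> Q k (pi y) -> dist m (F y) e < eps) ->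
  forall x, D x -> cV d D m F x.
Proof.
  intros HD HA HQ He Hinf x Dx.
  assert (Hvx : vanish m (pi x)).
  { destruct (HD x Dx) as [[u [Hu Eu]]|[j Hj]]. rewrite Eu. intros i Hi; apply Hgv; auto.
    intros i Hi; apply (HQin j); auto. }
  destruct (classic (pi x = gamma 1)) as [E|E].
  - intros eps Heps. destruct (Hinf eps Heps) as [N HN].
    assert (HAx : Abar (pi x)) by (rewrite E; exists 1; split; [lra|auto]).
    destruct (HA x Dx HAx eps Heps) as [dA [HdA KA]].
    destruct (min_list N (fun k del => forall y, D y -> Q k (pi y) -> del <= dist m (pi x) (pi y))) as [del [Hdel Hall]].
    { intros k a0 b0 Hab Hb y Dy Hy. specialize (Hb y Dy Hy). lra. }
    { intros k Hk. destruct (sep_closed m (Q k) (pi x) (Q_closed k)) as [dk [Hdk Kk]].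
      rewrite E. apply gamma1_notQ. auto. exists dk. split; auto. }
    exists (Rmin dA del). split. apply Rmin_pos; auto.
    intros y Dy Hy. pose proof (Rmin_l dA del). pose proof (Rmin_r dA del).
    destruct (HD y Dy) as [Ay|[k Hk]].
    + apply KA; auto. lra.
    + destruct (Compare_dec.lt_dec k N).
      * specialize (Hall k l y Dy Hk). specialize (Hpi x y). lra.
      * rewrite (He x Dx E), dist_sym. apply (HN k); auto. lia.
  - destruct (sep_family m Q (gamma 1) (fun k => gamma (T k)) (pi x) Q_closed HQg) as [d0 [Hd0 H0]].
    { apply (gamma_seq m gamma Hgc). intro; apply T_range. lra. auto. }
    { auto. } { auto. } { intros i Hi; apply Hgv; auto; lra. } { auto. }
    assert (Hnear : forall y j, Q j (pi x) -> D y -> d x y < d0 -> Q j (pi y) \/ ~ exists k, Q k (pi y)).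
    { intros y j Hj Dy Hy. destruct (classic (exists k, Q k (pi y))) as [[k Hk]|Hn]; [left|right; auto].
      destruct (classic (Q k (pi x))) as [Hk'|Hk'].
      - destruct (Nat.eq_dec k j) as [->|Hne]; auto. exfalso. apply (HQdisj k j (pi x)); auto.
      - specialize (H0 k Hk' (pi y) Hk). specialize (Hpi x y). lra. }
    destruct (classic (Abar (pi x))) as [HAx|HAx].
    + destruct (classic (exists j, Q j (pi x))) as [[j Hj]|Hnq].
      * apply (cV_loc d D (fun y => Abar (pi y)) (fun y => Q j (pi y))); [|apply HA|apply HQ]; auto.
        exists d0. split; auto. intros y Dy Hy.
        destruct (Hnear y j Hj Dy Hy) as [Hq|Hq]; auto.
        destruct (HD y Dy) as [Ay|Qy]; auto. contradiction.
      * apply (cV_loc d D (fun y => Abar (pi y)) (fun y => Abar (pi y))); try apply HA; auto.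
        exists d0. split; auto. intros y Dy Hy. left.
        destruct (HD y Dy) as [Ay|[k Hk]]; auto. exfalso.
        assert (~ Q k (pi x)) by (intro; apply Hnq; eauto).
        specialize (H0 k H (pi y) Hk). specialize (Hpi x y). lra.
    + destruct (HD x Dx) as [|[j Hj]]; [contradiction|].
      destruct (sep_closed m Abar (pi x) A_closed HAx Hvx) as [d1 [Hd1 H1]].
      apply (cV_loc d D (fun y => Q j (pi y)) (fun y => Q j (pi y))); try apply HQ; auto.
      exists (Rmin d0 d1). split. apply Rmin_pos; auto. intros y Dy Hy. left.
      pose proof (Rmin_l d0 d1). pose proof (Rmin_r d0 d1).
      destruct (Hnear y j Hj Dy ltac:(lra)) as [Hq|Hq]; auto.
      destruct (HD y Dy) as [Ay|Qy]; [|contradiction].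
      specialize (H1 _ Ay). specialize (Hpi x y). lra.
Qed.

End Glue.

Lemma pair_cont {X} (d : X -> X -> R) (D : X -> Prop) (f : X -> R) (G : X -> pt) k x :
  cR d D f x -> cV d D k G x ->
  forall e, 0 < e -> exists del, 0 < del /\ forall y, D y -> d x y < del -> d2 k (f x, G x) (f y, G y) < e.
Proof.
  intros Hf HG e He. destruct (Hf e He) as [d1 [Hd1 H1]]. destruct (HG e He) as [d3 [Hd3 H3]].
  exists (Rmin d1 d3). split. apply Rmin_pos; auto. intros y Dy Hy.
  pose proof (Rmin_l d1 d3). pose proof (Rmin_r d1 d3).
  unfold d2. simpl. apply Rmax_lub_lt. apply H1; auto; lra. apply H3; auto; lra.
Qed.

Lemma cR_th (D : R * pt -> Prop) p : cR (d2 m) D (fun q => th (fst q)) p.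
Proof.
  unfold th, Rdiv. apply (cR_mult (d2 m) D (fun q => 1 + fst q) (fun _ => / 2)).
  apply (cR_plus (d2 m) D (fun _ => 1)). apply cR_const. apply cR_fst. apply cR_const.
Qed.

Lemma cV_comp_snd (D : R * pt -> Prop) (C : set) k (G : pt -> pt) p :
  (forall q, D q -> C (snd q)) -> cont_on m k C G -> D p -> cV (d2 m) D k (fun q => G (snd q)) p.
Proof.
  intros HC HG Dp. apply (cV_comp (d2 m) D (dist m) C k snd G).
  intros e He. exists e. split; auto. intros. pose proof (d2_snd m p y). lra.
  auto. intros e He. apply HG; auto.
Qed.

Lemma fw_cont : forall x, Sx x -> cV (dist m) Sx m fw x.
Proof.
  apply (wedge_glue (dist m) Sx (fun y => y) fw (gamma 1)).
  - intros; lra.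
  - auto.
  - intros j x Sx0 Pjx.
    apply (cV_ext (dist m) _ m fw (fun y => Wj j (1/2) (phi j y))).
    { intros y [_ Hy]. apply E_fw; auto. } { split; auto. }
    apply (cV_comp (dist m) (fun y => Sx y /\ P j y) (d2 (dim j)) (Dj j) m
       (fun y => (1/2, phi j y)) (fun q => Wj j (fst q) (snd q))).
    + apply (pair_cont (dist m) _ (fun _ => 1/2) (phi j) (dim j) x). apply cR_const.
      intros e He. destruct (Hphi3 j x Pjx e He) as [del [Hdel H]]. exists del. split; auto.
      intros y [_ Hy] Hd. apply H; auto.
    + intros y [_ Hy]. split. simpl; lra. apply Hphi1; auto.
    + apply W_cont. split. simpl; lra. apply Hphi1; auto.
  - intros x _ E. unfold fw. destruct excluded_middle_informative; [auto|contradiction].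
  - intros eps Heps. destruct (near_tail eps Heps) as [N HN]. exists N. intros k Hk y _ Hy.
    rewrite (E_fw k y Hy). apply (HN k Hk). apply Wj_range. lra. apply Hphi1; auto.
Qed.

Lemma gc_cont : forall y, Wx y -> cV (dist m) Wx m gc y.
Proof.
  apply (bouquet_glue (dist m) Wx (fun y => y) gc origin).
  - intros; lra.
  - auto.
  - intros x Wx0 Ax. apply (cV_ext (dist m) _ m gc (fun _ => origin)).
    intros y [_ Hy]. apply E_gc_A; auto. split; auto. apply cV_const_pt.
  - intros j x Wx0 Qx.
    apply (cV_ext (dist m) _ m gc (fun y => phinv j (psi j y))).
    { intros y [_ Hy]. apply E_gc; auto. } { split; auto. }
    apply (cV_comp (dist m) (fun y => Wx y /\ Q j y) (dist (dim j)) (Mod j) m (psi j) (phinv j)).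
    + intros e He. destruct (Hpsi3 j x Qx e He) as [del [Hdel H]]. exists del. split; auto.
      intros y [_ Hy] Hd. apply H; auto.
    + intros y [_ Hy]. apply Hpsi1; auto.
    + intros e He. apply Hphi4; auto. apply Hpsi1; auto.
  - intros x _ E. apply E_gc_A. rewrite E. exists 1. split; [lra|auto].
  - intros eps Heps. destruct (HPdiam eps Heps) as [N HN]. exists N. intros k Hk y _ Hy.
    rewrite (E_gc k y Hy). apply (HN k Hk); [|apply HP0]. apply Hphi2. apply Hpsi1; auto.
Qed.

Definition DS (p : R * pt) := 0 <= fst p <= 1 /\ Sx (snd p).
Definition DW (p : R * pt) := 0 <= fst p <= 1 /\ Wx (snd p).

Lemma HS_cont : forall p, DS p -> cV (d2 m) DS m (fun q => HS (fst q) (snd q)) p.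
Proof.
  apply (wedge_glue (d2 m) DS snd (fun q => HS (fst q) (snd q)) origin).
  - apply d2_snd.
  - intros x [_ Hx]; auto.
  - intros j p [Hp1 Hp2] Pjp.
    apply (cV_ext (d2 m) _ m _ (fun q => phinv j (Sg j (th (fst q)) (phi j (snd q))))).
    { intros q [[Hq1 _] Hq]. apply E_HS; auto. } { split; auto. split; auto. }
    apply (cV_comp (d2 m) (fun q => DS q /\ P j (snd q)) (dist (dim j)) (Mod j) m
       (fun q => Sg j (th (fst q)) (phi j (snd q))) (phinv j)).
    + apply (cV_comp (d2 m) (fun q => DS q /\ P j (snd q)) (d2 (dim j))
          (fun q => 1/2 <= fst q <= 1 /\ Mod j (snd q)) (dim j)
          (fun q => (th (fst q), phi j (snd q))) (fun q => Sg j (fst q) (snd q))).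
      * apply (pair_cont (d2 m) _ (fun q => th (fst q)) (fun q => phi j (snd q)) (dim j) p).
        apply cR_th. apply (cV_comp_snd _ (P j)); auto. intros q [_ Hq]; auto. split; auto. split; auto.
      * intros q [[Hq1 _] Hq]. split. simpl. apply th_range; auto. apply Hphi1; auto.
      * apply HSg4. simpl. apply th_range; auto. apply Hphi1; auto.
    + intros q [[Hq1 _] Hq]. apply HSg1. apply th_range; auto. apply Hphi1; auto.
    + intros e He. apply Hphi4; auto. apply HSg1. apply th_range; auto. apply Hphi1; auto.
  - intros p _ E. simpl. rewrite E. unfold HS. destruct excluded_middle_informative; [auto|contradiction].
  - intros eps Heps. destruct (HPdiam eps Heps) as [N HN]. exists N. intros k Hk q [Hq1 _] Hq.
    rewrite (E_HS k (fst q) (snd q) Hq Hq1). apply (HN k Hk); [|apply HP0]. apply Hphi2. apply HSg1.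
    apply th_range; auto. apply Hphi1; auto.
Qed.

Lemma cR_ginv (Dd : R * pt -> Prop) p : (forall q, Dd q -> Abar (snd q)) -> Dd p ->
  cR (d2 m) Dd (fun q => ginv (snd q)) p.
Proof.
  intros HA Dp e He. destruct (ginv_spec _ (HA p Dp)) as [Hu Eu].
  destruct (gamma_inv_cont m gamma Hgv Hgc Hgi _ Hu e He) as [del [Hdel H]].
  exists del. split; auto. intros q Dq Hq.
  destruct (ginv_spec _ (HA q Dq)) as [Hu' Eu'].
  apply H; auto. rewrite <- Eu, <- Eu'. pose proof (d2_snd m p q). lra.
Qed.

Lemma HW_cont : forall p, DW p -> cV (d2 m) DW m (fun q => HW (fst q) (snd q)) p.
Proof.
  apply (bouquet_glue (d2 m) DW snd (fun q => HW (fst q) (snd q)) (gamma 1)).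
  - apply d2_snd.
  - intros x [_ Hx]; auto.
  - intros p [Hp1 Hp2] Ap.
    apply (cV_ext (d2 m) _ m _ (fun q => gamma (1 - fst q * (1 - ginv (snd q))))).
    { intros q [_ Hq]. apply E_HW_A; auto. } { split; auto. split; auto. }
    apply (cV_comp (d2 m) (fun q => DW q /\ Abar (snd q)) Rd (fun u => 0 <= u <= 1) m
       (fun q => 1 - fst q * (1 - ginv (snd q))) gamma).
    + intros e He.
      assert (Hc : cR (d2 m) (fun q => DW q /\ Abar (snd q)) (fun q => 1 - fst q * (1 - ginv (snd q))) p).
      { apply (cR_minus (d2 m) _ (fun _ => 1)). apply cR_const.
        apply (cR_mult (d2 m) _ fst). apply cR_fst.
        apply (cR_minus (d2 m) _ (fun _ => 1)). apply cR_const.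
        apply cR_ginv. intros q [_ Hq]; auto. split; auto. split; auto. }
      apply Hc; auto.
    + intros q [[Hq1 _] Hq]. destruct (ginv_spec _ Hq) as [Hg _]. nra.
    + intros e He. apply Hgc; auto. destruct (ginv_spec _ Ap) as [Hg _]. simpl. nra.
  - intros j p [Hp1 Hp2] Qp.
    apply (cV_ext (d2 m) _ m _ (fun q => Wj j (th (fst q)) (psi j (snd q)))).
    { intros q [[Hq1 _] Hq]. apply E_HW; auto. } { split; auto. split; auto. }
    apply (cV_comp (d2 m) (fun q => DW q /\ Q j (snd q)) (d2 (dim j)) (Dj j) m
       (fun q => (th (fst q), psi j (snd q))) (fun q => Wj j (fst q) (snd q))).
    + apply (pair_cont (d2 m) _ (fun q => th (fst q)) (fun q => psi j (snd q)) (dim j) p).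
      apply cR_th. apply (cV_comp_snd _ (Q j)); auto. intros q [_ Hq]; auto. split; auto. split; auto.
    + intros q [[Hq1 _] Hq]. split. simpl. apply th_range; auto. apply Hpsi1; auto.
    + apply W_cont. split. simpl. apply th_range; auto. apply Hpsi1; auto.
  - intros p _ E. simpl. rewrite E. rewrite E_HW_A. rewrite ginv_gamma by lra. f_equal. ring.
    exists 1. split; [lra|auto].
  - intros eps Heps. destruct (near_tail eps Heps) as [N HN]. exists N. intros k Hk q [Hq1 _] Hq.
    rewrite (E_HW k (fst q) (snd q) Hq Hq1). apply (HN k Hk). apply Wj_range.
    apply th_range; auto. apply Hpsi1; auto.
Qed.

Lemma th0 : th 0 = 1/2. Proof. unfold th; field. Qed.
Lemma th1 : th 1 = 1. Proof. unfold th; field. Qed.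

Lemma homot_of_cV (A : set) (H : R -> pt -> pt) :
  (forall p, 0 <= fst p <= 1 /\ A (snd p) ->
     cV (d2 m) (fun q => 0 <= fst q <= 1 /\ A (snd q)) m (fun q => H (fst q) (snd q)) p) ->
  cont_homotopy m m A H.
Proof.
  intros Hc t x Ht Hx eps Heps.
  destruct (Hc (t, x) (conj Ht Hx) eps Heps) as [del [Hdel K]].
  exists del. split; auto. intros s0 y Hs Hy H1 H2.
  apply (K (s0, y) (conj Hs Hy)). unfold d2. simpl. apply Rmax_lub_lt; auto.
Qed.

Theorem main_he : homotopy_equivalent m Sx Wx.
Proof.
  exists fw, gc. split; [|split; [|split; [|split; [|split]]]].
  - intros x [j Hj]. rewrite (E_fw j x Hj). apply Wj_in_W. lra. apply Hphi1; auto.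
  - intros y [Ay|[j Hj]].
    + rewrite E_gc_A by auto. exists O. apply HP0.
    + rewrite (E_gc j y Hj). exists j. apply Hphi2. apply Hpsi1; auto.
  - intros x Hx. apply fw_cont; auto.
  - intros y Hy. apply gc_cont; auto.
  - exists HS. split; [|split; [|split]].
    + apply homot_of_cV. intros p Hp. apply HS_cont. exact Hp.
    + intros t x Ht [j Hj]. exists j. rewrite (E_HS j t x Hj Ht). apply Hphi2. apply HSg1.
      apply th_range; auto. apply Hphi1; auto.
    + intros x [j Hj]. rewrite (E_HS j 0 x Hj ltac:(lra)). rewrite th0. rewrite (E_fw j x Hj).
      pose proof (Hphi1 j x Hj) as Hz. unfold Wj. destruct Rle_dec as [Hle|Hlt].
      * rewrite E_gc_A by (eexists; split; [|reflexivity]; apply param_range; apply clamp_range).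
        rewrite HSg2 by (auto; lra). apply Hphi5. apply HP0.
      * assert (HQ1 : Q j (psinv j (Sg j (1/2) (phi j x)))) by (apply Hpsi2; apply HSg1; auto; lra).
        rewrite (E_gc j _ HQ1). rewrite Hpsi6; auto. apply HSg1; auto; lra.
    + intros x [j Hj]. rewrite (E_HS j 1 x Hj ltac:(lra)). rewrite th1. rewrite HSg3.
      apply Hphi5; auto. apply Hphi1; auto.
  - exists HW. split; [|split; [|split]].
    + apply homot_of_cV. intros p Hp. apply HW_cont. exact Hp.
    + intros t y Ht [Ay|[j Hj]].
      * rewrite E_HW_A by auto. left. destruct (ginv_spec _ Ay) as [Hg _].
        eexists. split; [|reflexivity]. nra.
      * rewrite (E_HW j t y Hj Ht). apply Wj_in_W. apply th_range; auto. apply Hpsi1; auto.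
    + intros y Hy. destruct (classic (Abar y)) as [Ay|nAy].
      * rewrite E_HW_A by auto. rewrite E_gc_A by auto. unfold fw.
        destruct excluded_middle_informative; [|contradiction]. f_equal. ring.
      * destruct Hy as [|[j Hj]]; [contradiction|].
        rewrite (E_HW j 0 y Hj ltac:(lra)). rewrite th0. rewrite (E_gc j y Hj).
        assert (HP1 : P j (phinv j (psi j y))) by (apply Hphi2; apply Hpsi1; auto).
        rewrite (E_fw j _ HP1). rewrite Hphi6; auto. apply Hpsi1; auto.
    + intros y Hy. destruct (classic (Abar y)) as [Ay|nAy].
      * rewrite E_HW_A by auto. destruct (ginv_spec _ Ay) as [_ Eg]. transitivity (gamma (ginv y)); [f_equal; ring|auto].
      * destruct Hy as [|[j Hj]]; [contradiction|].
        rewrite (E_HW j 1 y Hj ltac:(lra)). rewrite th1.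
        pose proof (Hpsi1 j y Hj) as Hz. unfold Wj. destruct Rle_dec as [Hle|Hlt].
        -- pose proof (Hs1 j _ Hz). assert (Hs : s j (psi j y) = 1) by lra.
           pose proof (Hs3 j _ Hz Hs). fold (a j) in H0.
           assert (y = gamma (T j)) by (rewrite <- (Hpsi5 j y Hj), H0; apply psinv_a).
           rewrite Hs. replace (2 * (1 - 1)) with 0 by ring. rewrite clamp_id by lra.
           rewrite H1. f_equal. ring.
        -- rewrite HSg3 by auto. apply Hpsi5; auto.
Qed.

End Main.

Lemma cont_on_comp a b c A B f g : cont_on a b A f -> maps_into A B f -> cont_on b c B g ->
  cont_on a c A (fun x => g (f x)).
Proof.
  intros Hf HAB Hg x Ax e He. destruct (Hg (f x) (HAB x Ax) e He) as [d1 [Hd1 H1]].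
  destruct (Hf x Ax d1 Hd1) as [d0 [Hd0 H0]]. exists d0. split; auto.
Qed.

Theorem main_generic n (F : nat -> factor) :
  (forall j, good (fst (F j)) (snd (F j))) ->
  forall S W, is_wedge n F S -> is_bouquet n F W -> homotopy_equivalent (2 * n + 2) S W.
Proof.
  intros Hgood S W HWd HBq.
  set (m := (2 * n + 2)%nat).
  destruct HWd as [P [HPin [Hhom [HP0 [HPdisj [HPdiam HSeq]]]]]].
  destruct HBq as [gamma [T [Q HB]]]. cbv zeta in HB.
  destruct HB as [Hgv [Hgc [Hgi [HT0 [HTinc [HTcv [HQin [Hhom2 [HQg [HQarc [HQdisj [HQdiam HWeq]]]]]]]]]]]].
  set (dim := fun j => fst (F j)). set (Mod := fun j => snd (F j)).
  assert (C1 : forall j, exists fg : (pt -> pt) * (pt -> pt),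
    maps_into (P j) (Mod j) (fst fg) /\ maps_into (Mod j) (P j) (snd fg) /\
    cont_on m (dim j) (P j) (fst fg) /\ cont_on (dim j) m (Mod j) (snd fg) /\
    (forall x, P j x -> snd fg (fst fg x) = x) /\ (forall z, Mod j z -> fst fg (snd fg z) = z)).
  { intro j. destruct (Hhom j) as [f [g Hfg]]. exists (f, g). exact Hfg. }
  destruct (choice_fun _ C1) as [PH HPH].
  set (phi := fun j => fst (PH j)). set (phinv := fun j => snd (PH j)).
  assert (C2 : forall j, exists fg : (pt -> pt) * (pt -> pt),
    maps_into (Q j) (Mod j) (fst fg) /\ maps_into (Mod j) (Q j) (snd fg) /\
    cont_on m (dim j) (Q j) (fst fg) /\ cont_on (dim j) m (Mod j) (snd fg) /\
    (forall x, Q j x -> snd fg (fst fg x) = x) /\ (forall z, Mod j z -> fst fg (snd fg z) = z)).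
  { intro j. destruct (Hhom2 j) as [f [g Hfg]]. exists (f, g). exact Hfg. }
  destruct (choice_fun _ C2) as [PS HPS].
  set (psi0 := fun j => fst (PS j)). set (psinv0 := fun j => snd (PS j)).
  assert (Hphi1 : forall j, maps_into (P j) (Mod j) (phi j)) by (intro j; apply (HPH j)).
  assert (Hpsi01 : forall j, maps_into (Q j) (Mod j) (psi0 j)) by (intro j; apply (HPS j)).
  assert (C3 : forall j, exists h, maps_into (Mod j) (Mod j) h /\ cont_on (dim j) (dim j) (Mod j) h /\
      (forall x, Mod j x -> h (h x) = x) /\ h (psi0 j (gamma (T j))) = phi j origin).
  { intro j. destruct (Hgood j) as [_ [_ [Hh _]]]. apply Hh.
    apply Hpsi01; auto. apply Hphi1; auto. }
  destruct (choice_fun _ C3) as [h Hh].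
  assert (C4 : forall j, exists sS : (pt -> R) * (R -> pt -> pt),
     let s := fst sS in let Sg := snd sS in let a := phi j origin in
     (forall z, Mod j z -> s z <= 1) /\ s a = 1 /\ (forall z, Mod j z -> s z = 1 -> z = a) /\
     (forall z, Mod j z -> cR (dist (dim j)) (Mod j) s z) /\
     (forall th z, 1/2 <= th <= 1 -> Mod j z -> Mod j (Sg th z)) /\
     (forall th z, 1/2 <= th <= 1 -> Mod j z -> th <= s z -> Sg th z = a) /\
     (forall z, Mod j z -> Sg 1 z = z) /\
     (forall p, 1/2 <= fst p <= 1 -> Mod j (snd p) ->
        cV (d2 (dim j)) (fun q => 1/2 <= fst q <= 1 /\ Mod j (snd q)) (dim j) (fun q => Sg (fst q) (snd q)) p)).
  { intro j. destruct (Hgood j) as [_ [_ [_ Hc]]]. destruct (Hc (phi j origin)) as [s [Sg Hs]].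
    apply Hphi1; auto. exists (s, Sg). exact Hs. }
  destruct (choice_fun _ C4) as [SS HSS].
  set (psi := fun j y => h j (psi0 j y)). set (psinv := fun j z => psinv0 j (h j z)).
  assert (HSx : S = Sx P).
  { apply functional_extensionality. intro x. apply propositional_extensionality. apply HSeq. }
  assert (HWx : W = Wx Q gamma).
  { apply functional_extensionality. intro x. apply propositional_extensionality. apply HWeq. }
  rewrite HSx, HWx.
  apply (main_he m P Q gamma T dim Mod phi phinv psi psinv (fun j => fst (SS j)) (fun j => snd (SS j))); auto.
  - intro j. destruct (Hgood j) as [_ [Hc _]]. exact Hc.
  - intro j. apply (HPH j).
  - intro j. apply (HPH j).
  - intro j. apply (HPH j).
  - intro j. apply (HPH j).
  - intro j. apply (HPH j).
  - intros j y Hy. apply (proj1 (Hh j)). apply Hpsi01; auto.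
  - intros j z Hz. apply (HPS j). apply (proj1 (Hh j)); auto.
  - intro j. apply (cont_on_comp m (dim j) (dim j) (Q j) (Mod j) (psi0 j) (h j)). apply (HPS j). apply Hpsi01. apply (Hh j).
  - intro j. apply (cont_on_comp (dim j) (dim j) m (Mod j) (Mod j) (h j) (psinv0 j)). apply (Hh j). apply (Hh j). apply (HPS j).
  - intros j y Hy. unfold psinv, psi. rewrite (proj1 (proj2 (proj2 (Hh j)))). apply (HPS j); auto. apply Hpsi01; auto.
  - intros j z Hz. unfold psinv, psi, psi0, psinv0. rewrite (proj2 (proj2 (proj2 (proj2 (proj2 (HPS j)))))).
    apply (Hh j); auto. apply (proj1 (Hh j)); auto.
  - intro j. apply (Hh j).
  - intro j. apply (HSS j).
  - intro j. apply (HSS j).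
  - intro j. apply (HSS j).
  - intro j. apply (HSS j).
  - intro j. apply (HSS j).
  - intro j. apply (HSS j).
  - intro j. apply (HSS j).
  - intro j. apply (HSS j).
Qed.

Theorem proposition3p9 :
  forall n : nat, (1 <= n)%nat ->
    (forall S0 WS0 : set,
       is_wedge n (factors0 n) S0 -> is_bouquet n (factors0 n) WS0 ->
       homotopy_equivalent (2 * n + 2) S0 WS0) /\
    (forall S1 WS1 : set,
       is_wedge n (factors1 n) S1 -> is_bouquet n (factors1 n) WS1 ->
       homotopy_equivalent (2 * n + 2) S1 WS1).
Proof.
  intros n _. split; intros.
  - apply (main_generic n (factors0 n)); auto. intro j. simpl. apply good_sphere_prod.
  - apply (main_generic n (factors1 n)); auto. intro j. destruct j; simpl. apply good_sphere. apply good_sphere_prod.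
Qed.
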